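(* Let $D\subset \mathbb{R}^2$ be a link diagram, and let $D'$ and $D''$ be two vertically trivial states of $D$. Then there is a sequence $D_0,D_1,\dots,D_n$ of vertically trivial states of $D$ with $D_0=D'$ and $D_n=D''$ such that, for each $i=1,\dots,n$, $D_i$ is obtained from $D_{i-1}$ either by changing a single self-crossing of one component, or by changing all the crossings between two vertically adjacent components.
   Context: A link $L\subset\mathbb{R}^3$ is represented by a diagram $D\subset\mathbb{R}^2$: its orthogonal projection to $\mathbb{R}^2$ (assumed self-transversal) together with a crossing state at each double point telling which arc passes over; height means the third coordinate. A state of $D$ is any diagram obtained from $D$ by changing some of its crossing states (same projection). A link is vertically trivial if it meets every horizontal plane $\{z=c\}$ in at most two points, both belonging to the same component; for such a link the components have pairwise disjoint height intervals, hence are linearly ordered by height. A vertically trivial state of $D$ is a state of $D$ which is the diagram of a vertically trivial link. Two components are vertically adjacent if they are consecutive in the height order of a vertically trivial link having the given state as its diagram; changing all crossings between two vertically adjacent components transposes them in the vertical order. *)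

(* Defs.v *)
From Stdlib Require Import Reals.
From Coquelicot Require Import Coquelicot.
From mathcomp Require Import all_boot.

Set Implicit Arguments.
Unset Strict Implicit.
Unset Printing Implicit Defensive.
Local Open Scope R_scope.

(* Each component of the link (and of its planar projection) is a closed
   curve parametrized by a 1-periodic map on R; the fundamental domain of
   parameters is [0,1). *)
Definition in01 (t : R) : Prop := (0 <= t) /\ (t < 1).

(* A crossing (double point of the projection) of a diagram with m components:
   the two preimages (component c1 at parameter s1) and (component c2 at
   parameter s2). *)
Record crossing (m : nat) := Crossing {
  cr_c1 : 'I_m; cr_s1 : R; cr_c2 : 'I_m; cr_s2 : R }.

Definition dparam (m : nat) (i : 'I_m) (s : R) (j : 'I_m) (t : R) : Prop :=
  ~ (i = j /\ s = t).

Definition crossing_at (m : nat) (c : crossing m) (i : 'I_m) (s : R)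
    (j : 'I_m) (t : R) : Prop :=
  (cr_c1 c = i /\ cr_s1 c = s /\ cr_c2 c = j /\ cr_s2 c = t) \/
  (cr_c1 c = j /\ cr_s1 c = t /\ cr_c2 c = i /\ cr_s2 c = s).

Definition crossing_of (m : nat) (cr : seq (crossing m)) (k : 'I_(size cr))
  : crossing m := tnth (in_tuple cr) k.

(* The projection of a link diagram: m closed planar curves
   t |-> (gx i t, gy i t), i : 'I_m, which are C^1, regular, and together
   self-transversal: the only multiple points are finitely many transverse
   double points; [cr] lists every double point exactly once. *)
Definition is_diagram_projection (m : nat) (gx gy : 'I_m -> R -> R)
    (cr : seq (crossing m)) : Prop :=
  (forall i t, gx i (t + 1) = gx i t /\ gy i (t + 1) = gy i t) /\
  (forall i t, ex_derive (gx i) t /\ ex_derive (gy i) t) /\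
  (forall i t, continuous (Derive (gx i)) t /\ continuous (Derive (gy i)) t) /\
  (forall i t, Derive (gx i) t <> 0 \/ Derive (gy i) t <> 0) /\
  (forall k : 'I_(size cr),
     let c := crossing_of k in
     in01 (cr_s1 c) /\ in01 (cr_s2 c) /\
     dparam (cr_c1 c) (cr_s1 c) (cr_c2 c) (cr_s2 c) /\
     gx (cr_c1 c) (cr_s1 c) = gx (cr_c2 c) (cr_s2 c) /\
     gy (cr_c1 c) (cr_s1 c) = gy (cr_c2 c) (cr_s2 c) /\
     (Derive (gx (cr_c1 c)) (cr_s1 c) * Derive (gy (cr_c2 c)) (cr_s2 c)
      - Derive (gy (cr_c1 c)) (cr_s1 c) * Derive (gx (cr_c2 c)) (cr_s2 c)
      <> 0)) /\
  (forall i s j t, in01 s -> in01 t -> dparam i s j t ->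
     gx i s = gx j t -> gy i s = gy j t ->
     exists k : 'I_(size cr), crossing_at (crossing_of k) i s j t /\
       forall k' : 'I_(size cr), crossing_at (crossing_of k') i s j t -> k' = k) /\
  (forall i s j t l u, in01 s -> in01 t -> in01 u ->
     dparam i s j t -> dparam i s l u -> dparam j t l u ->
     gx i s = gx j t -> gy i s = gy j t -> gx i s = gx l u -> gy i s = gy l u ->
     False).

(* A state of the diagram: at each crossing k, [S k = true] means the strand
   (cr_c1, cr_s1) passes over, [false] means (cr_c2, cr_s2) passes over. *)
Definition state (m : nat) (cr : seq (crossing m)) := {ffun 'I_(size cr) -> bool}.

(* The link in R^3 with components t |-> (gx i t, gy i t, h i t) (h = height,
   the third coordinate) has diagram (projection, S). *)
Definition realizes (m : nat) (cr : seq (crossing m)) (S : state cr)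
    (h : 'I_m -> R -> R) : Prop :=
  (forall i t, h i (t + 1) = h i t) /\
  (forall i t, continuous (h i) t) /\
  (forall k : 'I_(size cr),
     let c := crossing_of k in
     if S k then (h (cr_c2 c) (cr_s2 c) < h (cr_c1 c) (cr_s1 c))
            else (h (cr_c1 c) (cr_s1 c) < h (cr_c2 c) (cr_s2 c))).

(* Vertically trivial link: every horizontal plane z = const meets it in at
   most two points, both on the same component.  (Distinct parameters give
   distinct points of the link, since the heights differ at crossings.) *)
Definition vertically_trivial_link (m : nat) (h : 'I_m -> R -> R) : Prop :=
  (forall i s j t, in01 s -> in01 t -> dparam i s j t ->
     h i s = h j t -> i = j) /\
  (forall i s j t l u, in01 s -> in01 t -> in01 u ->
     dparam i s j t -> dparam i s l u -> dparam j t l u ->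
     h i s = h j t -> h j t = h l u -> False).

Definition vertically_trivial_state (m : nat) (cr : seq (crossing m))
    (S : state cr) : Prop :=
  exists h : 'I_m -> R -> R, realizes S h /\ vertically_trivial_link h.

(* Components a, b are vertically adjacent for the state S: they are
   consecutive in the height order of some vertically trivial link having
   S as diagram (no third component lies strictly between them). *)
Definition vertically_adjacent (m : nat) (cr : seq (crossing m))
    (S : state cr) (a b : 'I_m) : Prop :=
  a <> b /\
  exists h : 'I_m -> R -> R, realizes S h /\ vertically_trivial_link h /\
    ~ (exists (c : 'I_m) (s t u : R), c <> a /\ c <> b /\
         ((h a t < h c s /\ h c s < h b u) \/
          (h b t < h c s /\ h c s < h a u))).

Definition is_self_crossing (m : nat) (cr : seq (crossing m))
    (k : 'I_(size cr)) : bool :=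
  cr_c1 (crossing_of k) == cr_c2 (crossing_of k).

Definition change_crossing (m : nat) (cr : seq (crossing m)) (S : state cr)
    (k : 'I_(size cr)) : state cr :=
  [ffun j => if j == k then ~~ S j else S j].

Definition between (m : nat) (cr : seq (crossing m)) (a b : 'I_m)
    (k : 'I_(size cr)) : bool :=
  let c := crossing_of k in
  ((cr_c1 c == a) && (cr_c2 c == b)) || ((cr_c1 c == b) && (cr_c2 c == a)).

Definition change_between (m : nat) (cr : seq (crossing m)) (S : state cr)
    (a b : 'I_m) : state cr :=
  [ffun j => if between a b j then ~~ S j else S j].

Definition move (m : nat) (cr : seq (crossing m)) (S T : state cr) : Prop :=
  (exists k : 'I_(size cr), is_self_crossing k /\ T = change_crossing S k) \/
  (exists a b : 'I_m, vertically_adjacent S a b /\ T = change_between S a b).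

(* Main.v *)
Require Import Defs.
From Stdlib Require Import Reals.
From Stdlib Require Import ZArith.
From Coquelicot Require Import Coquelicot.
From mathcomp Require Import all_boot.
From Stdlib Require Import Lra Lia ClassicalEpsilon Classical.
From mathcomp Require Import fingroup perm.
From mathcomp Require Import zify.
Unset Printing Implicit Defensive.
Local Open Scope R_scope.


Definition cc (x : R) : R := cos (2 * PI * x).

Lemma PI_gt_3 : PI > 3.
Proof. assert (H := PI2_3_2). lra. Qed.

Lemma int_small (k : Z) : -1 < IZR k < 1 -> k = 0%Z.
Proof. intros H. apply one_IZR_lt1. exact H. Qed.

Lemma cc_eq a b : cc a = cc b ->
  (exists k : Z, a - b = IZR k) \/ (exists k : Z, a + b = IZR k).
Proof.
  unfold cc; intros H.
  assert (H2 := form2 (2 * PI * a) (2 * PI * b)).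
  rewrite H Rminus_diag in H2.
  assert (HP := PI_RGT_0).
  assert (E : sin ((2 * PI * a - 2 * PI * b) / 2) = 0 \/
              sin ((2 * PI * a + 2 * PI * b) / 2) = 0).
  { destruct (Rmult_integral (-2 * sin ((2 * PI * a - 2 * PI * b) / 2))
                 (sin ((2 * PI * a + 2 * PI * b) / 2))) as [H3|H3].
    - lra.
    - left. destruct (Rmult_integral _ _ H3); [lra|assumption].
    - right; assumption. }
  destruct E as [E|E]; apply sin_eq_0_0 in E; destruct E as [k Hk].
  - left; exists k.
    apply (Rmult_eq_reg_l PI); [|lra]. nra.
  - right; exists k.
    apply (Rmult_eq_reg_l PI); [|lra]. nra.
Qed.

Lemma cc_window_plus w a b : w <= a < w + 1 -> w <= b < w + 1 -> a <> b ->
  cc a = cc b -> exists k : Z, a + b = IZR k.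
Proof.
  intros Ha Hb Hab H. destruct (cc_eq a b H) as [[k Hk]|Hk]; [|exact Hk].
  exfalso. assert (k = 0%Z) by (apply int_small; rewrite <- Hk; lra).
  subst k. simpl in Hk. apply Hab; lra.
Qed.

Lemma cc3 w a b c : w <= a < w + 1 -> w <= b < w + 1 -> w <= c < w + 1 ->
  a <> b -> a <> c -> b <> c -> cc a = cc b -> cc a = cc c -> False.
Proof.
  intros Ha Hb Hc Hab Hac Hbc E1 E2.
  destruct (cc_window_plus w a b Ha Hb Hab E1) as [k1 H1].
  destruct (cc_window_plus w a c Ha Hc Hac E2) as [k2 H2].
  assert (E : b - c = IZR (k1 - k2)) by (rewrite minus_IZR; lra).
  assert (k1 - k2 = 0)%Z by (apply int_small; rewrite <- E; lra).
  rewrite H in E. simpl in E. apply Hbc; lra.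
Qed.

Lemma cc_perturb c rho w : 0 < rho < 1 ->
  exists t, Rabs (t - c) < rho /\ cc t <> cc w.
Proof.
  intros Hr.
  destruct (classic (cc c = cc w)) as [E0|E0];
    [|exists c; split; [rewrite Rminus_diag Rabs_R0; lra|exact E0]].
  destruct (classic (cc (c + rho/3) = cc w)) as [E1|E1];
    [|exists (c + rho/3); split; [rewrite Rabs_right; lra|exact E1]].
  destruct (classic (cc (c + 2*rho/3) = cc w)) as [E2|E2];
    [|exists (c + 2*rho/3); split; [rewrite Rabs_right; lra|exact E2]].
  exfalso.
  apply cc_eq in E0; apply cc_eq in E1; apply cc_eq in E2.
  assert (D : forall x y : R, forall k l : Z, x = IZR k -> y = IZR l ->
     0 < x - y < 1 \/ -1 < x - y < 0 -> False).
  { intros x y k l -> -> Hxy.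
    assert (E : IZR k - IZR l = IZR (k - l)) by (rewrite minus_IZR; lra).
    assert (k - l = 0)%Z by (apply int_small; lra).
    rewrite H in E. simpl in E. lra. }
  destruct E0 as [[k0 H0]|[k0 H0]]; destruct E1 as [[k1 H1]|[k1 H1]];
  destruct E2 as [[k2 H2]|[k2 H2]];
  first [ apply (D _ _ _ _ H1 H0); lra
        | apply (D _ _ _ _ H2 H0); lra
        | apply (D _ _ _ _ H2 H1); lra ].
Qed.

Lemma abs_sin_le x : Rabs (sin x) <= Rabs x.
Proof.
  destruct (Rtotal_order x 0) as [H|[H|H]].
  - assert (sin (-x) < -x) by (apply sin_lt_x; lra).
    rewrite sin_neg in H0.
    destruct (Rle_or_lt (-x) 1).
    + assert (0 < -x <= PI) by (assert (HP:= PI_RGT_0); assert (PI > 3) by (apply PI_gt_3) ; lra) .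
      assert (0 <= sin (-x)) by (apply sin_ge_0; lra).
      rewrite sin_neg in H3.
      rewrite (Rabs_left1 (sin x)); [|lra]. rewrite Rabs_left; [|lra]. lra.
    + assert (HS := SIN_bound x). rewrite (Rabs_left x); [|lra].
      apply Rabs_le. lra.
  - subst. rewrite sin_0. lra.
  - assert (sin x < x) by (apply sin_lt_x; lra).
    destruct (Rle_or_lt x 1).
    + assert (0 <= sin x) by (apply sin_ge_0; assert (PI > 3) by (apply PI_gt_3); lra).
      rewrite Rabs_right; [|lra]. rewrite Rabs_right; [|lra]. lra.
    + assert (HS := SIN_bound x). rewrite (Rabs_right x); [|lra].
      apply Rabs_le. lra.
Qed.

Lemma cc_lip a b : Rabs (cc a - cc b) <= 2 * PI * Rabs (a - b).
Proof.
  unfold cc. rewrite form2.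
  assert (HP := PI_RGT_0).
  rewrite !Rabs_mult.
  assert (H1 := abs_sin_le ((2 * PI * a - 2 * PI * b) / 2)).
  assert (H2 : Rabs (sin ((2 * PI * a + 2 * PI * b) / 2)) <= 1)
    by (apply Rabs_le; apply SIN_bound).
  replace ((2 * PI * a - 2 * PI * b) / 2) with (PI * (a - b)) in H1 by field.
  rewrite Rabs_mult (Rabs_right PI) in H1; [|lra].
  rewrite Rabs_Ropp (Rabs_right 2); [|lra].
  replace ((2 * PI * a - 2 * PI * b) / 2) with (PI * (a - b)) by field.
  assert (0 <= Rabs (sin (PI * (a - b)))) by apply Rabs_pos.
  assert (0 <= Rabs (sin ((2 * PI * a + 2 * PI * b) / 2))) by apply Rabs_pos.
  nra.
Qed.

Lemma cc_plus1 x : cc (x + 1) = cc x.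
Proof.
  unfold cc. replace (2 * PI * (x + 1)) with (2 * PI * x + 2 * PI) by ring.
  rewrite cos_plus cos_2PI sin_2PI. ring.
Qed.

Lemma cc_minus1 x : cc (x - 1) = cc x.
Proof. rewrite <- (cc_plus1 (x - 1)). f_equal. ring. Qed.

Lemma cc_opp x : cc (- x) = cc x.
Proof. unfold cc. replace (2 * PI * - x) with (- (2 * PI * x)) by ring. apply cos_neg. Qed.

Lemma cc_one_minus x : cc (1 - x) = cc x.
Proof. replace (1 - x) with (- x + 1) by ring. rewrite cc_plus1 cc_opp. reflexivity. Qed.

Lemma cc_decr a b : 0 <= a -> a < b -> b <= 1/2 -> cc b < cc a.
Proof.
  intros. unfold cc. assert (HP := PI_RGT_0).
  apply cos_decreasing_1; nra.
Qed.

Lemma cc_half_inj x y : 0 <= x < 1 -> 0 <= y < 1 -> cc (x / 2) = cc (y / 2) -> x = y.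
Proof.
  intros Hx Hy H. unfold cc in H. assert (HP := PI_RGT_0).
  replace (2 * PI * (x / 2)) with (PI * x) in H by field.
  replace (2 * PI * (y / 2)) with (PI * y) in H by field.
  apply cos_inj in H; [|nra|nra].
  apply (Rmult_eq_reg_l PI); lra.
Qed.

Lemma cc_bound x : -1 <= cc x <= 1.
Proof. unfold cc. apply COS_bound. Qed.


Lemma cont_plus (f g : R -> R) x : continuous f x -> continuous g x ->
  continuous (fun t : R => f t + g t) x.
Proof. intros; apply (continuous_plus f g); auto. Qed.
Lemma cont_minus (f g : R -> R) x : continuous f x -> continuous g x ->
  continuous (fun t => f t - g t) x.
Proof. intros; apply (continuous_minus f g); auto. Qed.
Lemma cont_mult (f g : R -> R) x : continuous f x -> continuous g x ->
  continuous (fun t => f t * g t) x.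
Proof. intros; apply (continuous_mult f g); auto. Qed.
Lemma cont_const (c : R) x : continuous (fun _ : R => c) x.
Proof. apply continuous_const. Qed.
Lemma cont_id x : continuous (fun t : R => t) x.
Proof. apply continuous_id. Qed.
Lemma cont_abs (f : R -> R) x : continuous f x -> continuous (fun t => Rabs (f t)) x.
Proof. intros; apply continuous_Rabs_comp; auto. Qed.
Lemma cont_cos (f : R -> R) x : continuous f x -> continuous (fun t => cos (f t)) x.
Proof. intros; apply continuous_cos_comp; auto. Qed.
Lemma cont_comp (f g : R -> R) x : continuous f x -> continuous g (f x) ->
  continuous (fun t => g (f t)) x.
Proof. intros; apply (continuous_comp f g); auto. Qed.

Definition mx (a b : R) := (a + b + Rabs (a - b)) / 2.
Definition mn (a b : R) := (a + b - Rabs (a - b)) / 2.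

Lemma mx_l a b : a <= mx a b.
Proof. unfold mx. assert (H := Rle_abs (a - b)). lra. Qed.
Lemma mx_r a b : b <= mx a b.
Proof. unfold mx. assert (H := Rabs_minus_sym a b). assert (H2 := Rle_abs (b - a)). lra. Qed.
Lemma mx_lub a b c : a <= c -> b <= c -> mx a b <= c.
Proof. unfold mx. intros. destruct (Rle_or_lt a b).
  - rewrite Rabs_left1; lra.
  - rewrite Rabs_right; lra. Qed.
Lemma mn_l a b : mn a b <= a.
Proof. unfold mn. assert (H := Rabs_minus_sym a b). assert (H2 := Rle_abs (b - a)). lra. Qed.
Lemma mn_r a b : mn a b <= b.
Proof. unfold mn. assert (H := Rle_abs (a - b)). lra. Qed.
Lemma mn_glb a b c : c <= a -> c <= b -> c <= mn a b.
Proof. unfold mn. intros. destruct (Rle_or_lt a b).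
  - rewrite Rabs_left1; lra.
  - rewrite Rabs_right; lra. Qed.
Lemma mx_eq_l a b : b <= a -> mx a b = a.
Proof. unfold mx. intros. rewrite Rabs_right; lra. Qed.
Lemma mx_eq_r a b : a <= b -> mx a b = b.
Proof. unfold mx. intros. rewrite Rabs_left1; lra. Qed.
Lemma mn_eq_l a b : a <= b -> mn a b = a.
Proof. unfold mn. intros. rewrite Rabs_left1; lra. Qed.
Lemma mn_eq_r a b : b <= a -> mn a b = b.
Proof. unfold mn. intros. rewrite Rabs_right; lra. Qed.
Lemma mx_mono a b a' b' : a <= a' -> b <= b' -> mx a b <= mx a' b'.
Proof. intros. apply mx_lub. - assert (H1 := mx_l a' b'); lra. - assert (H1 := mx_r a' b'); lra. Qed.
Lemma mn_mono a b a' b' : a <= a' -> b <= b' -> mn a b <= mn a' b'.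
Proof. intros. apply mn_glb. - assert (H1 := mn_l a b); lra. - assert (H1 := mn_r a b); lra. Qed.
Lemma cont_mx (f g : R -> R) x : continuous f x -> continuous g x ->
  continuous (fun t => mx (f t) (g t)) x.
Proof.
  intros Hf Hg. unfold mx, Rdiv.
  apply (@cont_mult (fun t : R => f t + g t + Rabs (f t - g t)) (fun _ : R => / 2)).
  - apply cont_plus; [apply cont_plus; auto|]. apply cont_abs. apply cont_minus; auto.
  - apply cont_const.
Qed.
Lemma cont_mn (f g : R -> R) x : continuous f x -> continuous g x ->
  continuous (fun t => mn (f t) (g t)) x.
Proof.
  intros Hf Hg. unfold mn, Rdiv.
  apply (@cont_mult (fun t : R => f t + g t - Rabs (f t - g t)) (fun _ : R => / 2)).
  - apply cont_minus; [apply cont_plus; auto|]. apply cont_abs. apply cont_minus; auto.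
  - apply cont_const.
Qed.

Definition ramp (M : R) (n : R * R) (t : R) : R := mn (snd n) (snd n + M * (t - fst n)).

Definition Fr (M : R) (n0 : R * R) (l : list (R * R)) (t : R) : R :=
  List.fold_right (fun n acc => mx (ramp M n t) acc) (ramp M n0 t) l.

Lemma Fr_ge M n0 l t n : List.In n (n0 :: l) -> ramp M n t <= Fr M n0 l t.
Proof.
  induction l as [|a l IH]; simpl.
  - intros [->|[]]. lra.
  - intros [->|[->|H]].
    + eapply Rle_trans; [|apply mx_r]. apply IH; now left.
    + apply mx_l.
    + eapply Rle_trans; [|apply mx_r]. apply IH. now right.
Qed.

Lemma Fr_le M n0 l t B : (forall n, List.In n (n0 :: l) -> ramp M n t <= B) ->
  Fr M n0 l t <= B.
Proof.
  induction l as [|a l IH]; simpl; intros H.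
  - apply H. now left.
  - apply mx_lub.
    + apply H. right; now left.
    + apply IH. intros n [->|Hn]; apply H; [now left|right; now right].
Qed.

Lemma ramp_mono M n t t' : 0 <= M -> t <= t' -> ramp M n t <= ramp M n t'.
Proof. intros. unfold ramp. apply mn_mono; [lra|]. apply Rplus_le_compat_l; apply Rmult_le_compat_l; lra. Qed.

Lemma Fr_mono M n0 l t t' : 0 <= M -> t <= t' -> Fr M n0 l t <= Fr M n0 l t'.
Proof.
  intros HM Ht. induction l as [|a l IH]; simpl.
  - apply ramp_mono; auto.
  - apply mx_mono; auto. apply ramp_mono; auto.
Qed.

Lemma ramp_cont M n x : continuous (ramp M n) x.
Proof.
  unfold ramp. apply (@cont_mn (fun _ => snd n) (fun t : R => snd n + M * (t - fst n))).
  - apply cont_const.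
  - apply cont_plus; [apply cont_const|]. apply cont_mult; [apply cont_const|].
    apply cont_minus; [apply cont_id|apply cont_const].
Qed.

Lemma Fr_cont M n0 l x : continuous (Fr M n0 l) x.
Proof.
  induction l as [|a l IH]; simpl.
  - apply ramp_cont.
  - apply (@cont_mx (ramp M a) (Fr M n0 l)); auto. apply ramp_cont.
Qed.

Lemma Fr_node M n0 l y v :
  List.In (y, v) (n0 :: l) ->
  (forall z w, List.In (z, w) (n0 :: l) -> (z <= y -> w <= v) /\ (y < z -> w - v <= M * (z - y))) ->
  Fr M n0 l y = v.
Proof.
  intros Hin Hc. apply Rle_antisym.
  - apply Fr_le. intros [z w] Hzw. destruct (Hc z w Hzw) as [H1 H2]. unfold ramp; simpl.
    destruct (Rle_or_lt z y).
    + eapply Rle_trans; [apply mn_l|]. auto.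
    + eapply Rle_trans; [apply mn_r|]. specialize (H2 H). lra.
  - replace v with (ramp M (y, v) y) at 1.
    + apply Fr_ge; auto.
    + unfold ramp; simpl. rewrite Rminus_diag Rmult_0_r Rplus_0_r. apply mn_eq_l. lra.
Qed.

Lemma loc_int (t0 a b : R) (P : R -> Prop) : a < t0 < b -> (forall t, a < t < b -> P t) -> locally t0 P.
Proof.
  intros H HP.
  assert (Hd : 0 < Rmin (t0 - a) (b - t0)) by (apply Rmin_glb_lt; lra).
  exists (mkposreal _ Hd). intros y Hy.
  change (Rabs (y - t0) < Rmin (t0 - a) (b - t0)) in Hy.
  apply HP. assert (H1 := Rmin_l (t0 - a) (b - t0)). assert (H2 := Rmin_r (t0 - a) (b - t0)).
  apply Rabs_def2 in Hy. lra.
Qed.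

Lemma lb_pos {A : Type} (l : list A) (P : A -> Prop) (f : A -> R) :
  (forall a, List.In a l -> P a -> 0 < f a) ->
  exists e, 0 < e /\ forall a, List.In a l -> P a -> e <= f a.
Proof.
  induction l as [|a l IH]; intros H.
  - exists 1. split; [lra|]. intros a [].
  - destruct IH as [e [He He2]].
    { intros b Hb HPb. apply H; [now right|auto]. }
    destruct (classic (P a)) as [Pa|nPa].
    + assert (Ha := H a (or_introl (Logic.eq_refl a)) Pa).
      exists (Rmin e (f a)). split; [apply Rmin_glb_lt; auto|].
      intros b [->|Hb] HPb.
      * apply Rmin_r.
      * eapply Rle_trans; [apply Rmin_l|]. auto.
    + exists e. split; auto. intros b [->|Hb] HPb; [contradiction|auto].
Qed.

Lemma ub_ex {A : Type} (l : list A) (P : A -> Prop) (f : A -> R) :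
  exists M, 0 <= M /\ forall a, List.In a l -> P a -> f a <= M.
Proof.
  induction l as [|a l IH].
  - exists 0. split; [lra|]. intros a [].
  - destruct IH as [M [HM HM2]].
    exists (Rmax M (f a)). split.
    + eapply Rle_trans; [apply HM|apply Rmax_l].
    + intros b [->|Hb] HPb.
      * apply Rmax_r.
      * eapply Rle_trans; [apply HM2; auto|apply Rmax_l].
Qed.

Lemma frac_of (t : R) (n : Z) : IZR n <= t < IZR n + 1 -> frac_part t = t - IZR n.
Proof.
  intros H. destruct (Int_part_frac_part_spec t n (t - IZR n)) as [_ E].
  - lra.
  - ring.
  - symmetry; exact E.
Qed.

Lemma frac_id (t : R) : 0 <= t < 1 -> frac_part t = t.
Proof. intros H. rewrite (frac_of _ 0%Z); simpl; lra. Qed.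

Lemma frac_plus1 (t : R) : frac_part (t + 1) = frac_part t.
Proof.
  assert (H := base_fp t). assert (E := Rplus_Int_part_frac_part t).
  rewrite (frac_of _ (Int_part t + 1)%Z).
  - rewrite plus_IZR. unfold frac_part. lra.
  - rewrite plus_IZR. lra.
Qed.

Lemma G_exists (X : list R) (u : R -> R) :
  List.In 0 X -> (forall x, List.In x X -> 0 <= x < 1) ->
  (forall x y, List.In x X -> List.In y X -> x < y -> u x < u y /\ u y < u x + 1) ->
  exists G : R -> R,
    (forall t, G (t + 1) = G t) /\ (forall t, continuous G t) /\
    (forall x, List.In x X -> G x = cc (u x)) /\
    (forall t, -1 <= G t <= 1) /\
    (forall s t w, 0 <= s < 1 -> 0 <= t < 1 -> 0 <= w < 1 -> s <> t -> s <> w -> t <> w ->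
       G s = G t -> G s = G w -> False).
Proof.
  intros H0 HX Hu.
  destruct (lb_pos (List.list_prod X X) (fun p => fst p < snd p) (fun p => u (snd p) - u (fst p)))
    as [e1 [He1 He1b]].
  { intros [x y] Hxy Hlt. simpl in *. apply List.in_prod_iff in Hxy.
    destruct Hxy. destruct (Hu x y); auto. lra. }
  destruct (lb_pos X (fun _ => True) (fun x => u 0 + 1 - u x)) as [e2 [He2 He2b]].
  { intros x Hx _. destruct (Rle_or_lt x 0).
    - assert (x = 0) by (specialize (HX x Hx); lra). subst. lra.
    - destruct (Hu 0 x); auto. lra. }
  set (eps := Rmin (Rmin e1 e2) (1/2)).
  assert (Heps : 0 < eps /\ eps <= e1 /\ eps <= e2 /\ eps <= 1/2).
  { unfold eps. assert (H1 := Rmin_l (Rmin e1 e2) (1/2)). assert (H2 := Rmin_r (Rmin e1 e2) (1/2)).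
    assert (H3 := Rmin_l e1 e2). assert (H4 := Rmin_r e1 e2).
    repeat split; try lra. apply Rmin_glb_lt; [apply Rmin_glb_lt|]; lra. }
  set (n0 := (1, u 0 + 1 - eps)).
  set (l := List.map (fun x => (x, u x - eps * x)) X).
  destruct (ub_ex (List.list_prod (n0 :: l) (n0 :: l)) (fun p => fst (fst p) < fst (snd p))
              (fun p => (snd (snd p) - snd (fst p)) / (fst (snd p) - fst (fst p)))) as [M [HM HMb]].
  assert (Hmem : forall y v, List.In (y, v) (n0 :: l) ->
            (y = 1 /\ v = u 0 + 1 - eps) \/ (List.In y X /\ v = u y - eps * y)).
  { intros y v [E|E].
    - left. unfold n0 in E. inversion E. auto.
    - right. unfold l in E. apply List.in_map_iff in E. destruct E as [x [Ex Hx]].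
      inversion Ex. subst. auto. }
  assert (Hcond : forall y v, List.In (y, v) (n0 :: l) ->
     forall z w, List.In (z, w) (n0 :: l) -> (z <= y -> w <= v) /\ (y < z -> w - v <= M * (z - y))).
  { intros y v Hyv z w Hzw. split.
    - intros Hzy.
      destruct (Hmem y v Hyv) as [[-> ->]|[Hy ->]]; destruct (Hmem z w Hzw) as [[-> ->]|[Hz ->]].
      + lra.
      + assert (He := He2b z Hz I). assert (HXz := HX z Hz). assert (0 <= eps * z) by (apply Rmult_le_pos; lra). lra.
      + assert (HXy := HX y Hy). lra.
      + destruct (Rle_lt_or_eq_dec z y Hzy) as [Hlt|Heq].
        * assert (He := He1b (z, y)). simpl in He. specialize (He (proj2 (List.in_prod_iff _ _ _ _) (conj Hz Hy)) Hlt).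
          assert (HXz := HX z Hz). assert (HXy := HX y Hy). assert (eps * (y - z) <= eps * 1) by (apply Rmult_le_compat_l; lra). lra.
        * subst. lra.
    - intros Hyz. assert (HH := HMb ((y, v), (z, w))). simpl in HH.
      specialize (HH (proj2 (List.in_prod_iff _ _ _ _) (conj Hyv Hzw)) Hyz).
      apply (Rmult_le_compat_r (z - y)) in HH; [|lra].
      unfold Rdiv in HH. rewrite Rmult_assoc Rinv_l in HH; lra. }
  set (Psi := fun t => eps * t + Fr M n0 l t).
  assert (Psi_node : forall x, List.In x X -> Psi x = u x).
  { intros x Hx. unfold Psi. rewrite (Fr_node M n0 l x (u x - eps * x)).
    - ring.
    - right. unfold l. apply List.in_map_iff. exists x. auto.
    - apply Hcond. right. unfold l. apply List.in_map_iff. exists x. auto. }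
  assert (Psi1 : Psi 1 = u 0 + 1).
  { unfold Psi. rewrite (Fr_node M n0 l 1 (u 0 + 1 - eps)).
    - ring.
    - now left.
    - apply Hcond. now left. }
  assert (Psi0 : Psi 0 = u 0) by (apply Psi_node; auto).
  assert (Psi_incr : forall s t, s < t -> Psi s < Psi t).
  { intros s t Hst. unfold Psi. assert (H := Fr_mono M n0 l s t HM (Rlt_le _ _ Hst)). assert (eps * s < eps * t) by (apply Rmult_lt_compat_l; lra). lra. }
  assert (Psi_cont : forall t, continuous Psi t).
  { intros t. unfold Psi. apply (@cont_plus (fun t => eps * t) (Fr M n0 l)).
    - apply (@cont_mult (fun _ => eps) (fun t => t)); [apply cont_const|apply cont_id].
    - apply Fr_cont. }
  set (G := fun t => cc (Psi (frac_part t))).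
  exists G. split; [|split; [|split; [|split]]].
  - intros t. unfold G. rewrite frac_plus1. reflexivity.
  - intros t0.
    set (a := IZR (Int_part t0)).
    assert (Ha : a <= t0 < a + 1) by (unfold a; assert (H := base_Int_part t0); lra).
    set (Psih := fun s => Psi (mx s 0) + Psi (mn s 0 + 1) - Psi 1).
    apply (@continuous_ext_loc R_UniformSpace R_UniformSpace G (fun t => cc (Psih (t - a))) t0).
    + apply (loc_int t0 (a - 1) (a + 1)); [lra|].
      intros t Ht. unfold G, Psih. destruct (Rle_or_lt a t).
      * rewrite (frac_of _ (Int_part t0)); [|fold a; lra]. fold a.
        rewrite mx_eq_l; [|lra]. rewrite mn_eq_r; [|lra]. rewrite Rplus_0_l. f_equal. ring.
      * rewrite (frac_of _ (Int_part t0 - 1)%Z); [|rewrite minus_IZR; fold a; simpl; lra].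
        rewrite minus_IZR. fold a. simpl.
        rewrite mx_eq_r; [|lra]. rewrite mn_eq_l; [|lra]. rewrite Psi1 Psi0.
        rewrite <- (cc_minus1 (Psi (t - (a - 1)))). f_equal.
        replace (t - a + 1) with (t - (a - 1)) by ring. ring.
    + unfold cc. apply cont_cos.
      apply (@cont_mult (fun _ => 2 * PI) (fun t => Psih (t - a))); [apply cont_const|].
      apply (@cont_comp (fun t => t - a) Psih).
      * apply cont_minus; [apply cont_id|apply cont_const].
      * unfold Psih. apply (@cont_minus (fun s => Psi (mx s 0) + Psi (mn s 0 + 1)) (fun _ => Psi 1)); [|apply cont_const].
        apply (@cont_plus (fun s => Psi (mx s 0)) (fun s => Psi (mn s 0 + 1))).
        -- apply (@cont_comp (fun s => mx s 0) Psi); [|apply Psi_cont].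
           apply (@cont_mx (fun s => s) (fun _ => 0)); [apply cont_id|apply cont_const].
        -- apply (@cont_comp (fun s => mn s 0 + 1) Psi); [|apply Psi_cont].
           apply (@cont_plus (fun s => mn s 0) (fun _ => 1)); [|apply cont_const].
           apply (@cont_mn (fun s => s) (fun _ => 0)); [apply cont_id|apply cont_const].
  - intros x Hx. unfold G. rewrite frac_id; [|auto]. rewrite Psi_node; auto.
  - intros t. apply cc_bound.
  - intros s t w Hs Ht Hw Hst Hsw Htw E1 E2. unfold G in E1, E2.
    rewrite !frac_id in E1, E2; auto.
    assert (Win : forall z, 0 <= z < 1 -> u 0 <= Psi z < u 0 + 1).
    { intros z Hz. rewrite -Psi1 -Psi0. destruct (Rle_lt_or_eq_dec 0 z (proj1 Hz)) as [H|H].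
      - split; [apply Rlt_le, Psi_incr; lra|apply Psi_incr; lra].
      - subst. split; [lra|apply Psi_incr; lra]. }
    assert (Inj : forall a b, a <> b -> Psi a <> Psi b).
    { intros a b Hab E. destruct (Rtotal_order a b) as [H|[H|H]].
      - apply Psi_incr in H; lra.
      - contradiction.
      - apply Psi_incr in H; lra. }
    apply (cc3 (u 0) _ _ _ (Win s Hs) (Win t Ht) (Win w Hw) (Inj _ _ Hst) (Inj _ _ Hsw) (Inj _ _ Htw) E1 E2).
Qed.


Definition Rltb (a b : R) : bool := if Rlt_dec a b then true else false.
Lemma RltbP a b : Rltb a b = true <-> a < b.
Proof. unfold Rltb. destruct (Rlt_dec a b); split; intros; auto; discriminate. Qed.
Lemma RltbF a b : Rltb a b = false <-> ~ a < b.
Proof. unfold Rltb. destruct (Rlt_dec a b); split; intros; auto; try discriminate; contradiction. Qed.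

Lemma nat_lt_INR (a b : nat) : (a < b)%N -> INR a + 1 <= INR b.
Proof. move=> /ltP H. rewrite <- S_INR. apply le_INR. exact H. Qed.

Lemma nth_In_seq {T : Type} (x0 : T) (s : seq T) (n : nat) : (n < size s)%N -> List.In (nth x0 s n) s.
Proof.
  elim: s n => [|a s IH] [|n] //= H.
  - now left.
  - right. apply IH. exact H.
Qed.

Lemma crossing_In {m : nat} (cr : seq (crossing m)) (k : 'I_(size cr)) : List.In (crossing_of k) cr.
Proof.
  unfold crossing_of. rewrite (tnth_nth (crossing_of k)). apply nth_In_seq. simpl.
  exact (ltn_ord k).
Qed.

Definition pts {m : nat} (cr : seq (crossing m)) : list ('I_m * R) :=
  List.map (fun i => (i, 0)) (enum 'I_m) ++
  List.map (fun c => (cr_c1 c, cr_s1 c)) cr ++ List.map (fun c => (cr_c2 c, cr_s2 c)) cr.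

Definition Xs {m : nat} (cr : seq (crossing m)) (i : 'I_m) : list R :=
  List.map snd (List.filter (fun p => fst p == i) (pts cr)).

Lemma Xs_spec {m : nat} (cr : seq (crossing m)) i x : List.In x (Xs cr i) <-> List.In (i, x) (pts cr).
Proof.
  unfold Xs. rewrite List.in_map_iff. split.
  - intros [[j y] [E H]]. simpl in E. subst. apply List.filter_In in H. destruct H as [H1 H2].
    simpl in H2. move/eqP: H2 => E2. subst. exact H1.
  - intros H. exists (i, x). split; auto. apply List.filter_In. split; auto. simpl. apply eqxx.
Qed.



Lemma enum_In {m : nat} (i : 'I_m) : List.In i (enum 'I_m).
Proof.
  have : i \in enum 'I_m by rewrite mem_enum.
  elim: (enum 'I_m) => [|a s IH] //=. rewrite in_cons => /orP [/eqP ->|H]; [now left|right; auto].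
Qed.

Lemma pts_zero {m : nat} (cr : seq (crossing m)) i : List.In (i, 0) (pts cr).
Proof.
  unfold pts. apply List.in_or_app. left. apply List.in_map_iff. exists i. split; auto.
  apply enum_In.
Qed.

Lemma pts_c1 {m : nat} (cr : seq (crossing m)) (k : 'I_(size cr)) :
  List.In (cr_c1 (crossing_of k), cr_s1 (crossing_of k)) (pts cr).
Proof.
  unfold pts. apply List.in_or_app. right. apply List.in_or_app. left.
  apply List.in_map_iff. exists (crossing_of k). split; auto. apply crossing_In.
Qed.

Lemma pts_c2 {m : nat} (cr : seq (crossing m)) (k : 'I_(size cr)) :
  List.In (cr_c2 (crossing_of k), cr_s2 (crossing_of k)) (pts cr).
Proof.
  unfold pts. apply List.in_or_app. right. apply List.in_or_app. right.
  apply List.in_map_iff. exists (crossing_of k). split; auto. apply crossing_In.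
Qed.

Definition params_ok {m : nat} (cr : seq (crossing m)) : Prop :=
  forall k : 'I_(size cr), in01 (cr_s1 (crossing_of k)) /\ in01 (cr_s2 (crossing_of k)).

Lemma params_of_HD {m : nat} (gx gy : 'I_m -> R -> R) (cr : seq (crossing m)) :
  is_diagram_projection gx gy cr -> params_ok cr.
Proof.
  intros HD k. destruct HD as [_ [_ [_ [_ [H _]]]]]. destruct (H k) as [H1 [H2 _]]. auto.
Qed.

Lemma In_nth_seq {T : Type} (x0 x : T) (s : seq T) : List.In x s ->
  exists n, (n < size s)%N /\ nth x0 s n = x.
Proof.
  elim: s => [|a s IH] //= [->|H].
  - by exists 0%N.
  - destruct (IH H) as [n [Hn En]]. by exists n.+1.
Qed.

Lemma In_crossing {m : nat} (cr : seq (crossing m)) c : List.In c cr ->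
  exists k : 'I_(size cr), crossing_of k = c.
Proof.
  intros H. destruct (In_nth_seq c c cr H) as [n [Hn En]].
  exists (Ordinal Hn). unfold crossing_of. by rewrite (tnth_nth c).
Qed.

Lemma pts_range {m : nat} (cr : seq (crossing m)) : params_ok cr ->
  forall i x, List.In (i, x) (pts cr) -> 0 <= x < 1.
Proof.
  intros Hp i x H. unfold pts in H. apply List.in_app_or in H. destruct H as [H|H].
  - apply List.in_map_iff in H. destruct H as [j [E _]]. inversion E. lra.
  - apply List.in_app_or in H. destruct H as [H|H]; apply List.in_map_iff in H;
      destruct H as [c [E Hc]]; inversion E; subst;
      destruct (In_crossing cr c Hc) as [k Ek]; destruct (Hp k) as [H1 H2]; rewrite Ek in H1 H2;
      unfold in01 in *; auto.
Qed.

Definition valid {m : nat} (cr : seq (crossing m)) (U : 'I_m -> R -> R) : Prop :=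
  forall i x y, List.In (i, x) (pts cr) -> List.In (i, y) (pts cr) -> x < y ->
    U i x < U i y /\ U i y < U i x + 1.

Definition gen {m : nat} (cr : seq (crossing m)) (U : 'I_m -> R -> R) : Prop :=
  forall k : 'I_(size cr), cr_c1 (crossing_of k) = cr_c2 (crossing_of k) ->
    cc (U (cr_c1 (crossing_of k)) (cr_s1 (crossing_of k))) <>
    cc (U (cr_c1 (crossing_of k)) (cr_s2 (crossing_of k))).

Definition stateOf {m : nat} (cr : seq (crossing m)) (r : {perm 'I_m}) (U : 'I_m -> R -> R)
  : state cr :=
  [ffun k => if cr_c1 (crossing_of k) == cr_c2 (crossing_of k)
             then Rltb (cc (U (cr_c1 (crossing_of k)) (cr_s2 (crossing_of k))))
                       (cc (U (cr_c1 (crossing_of k)) (cr_s1 (crossing_of k))))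
             else (r (cr_c2 (crossing_of k)) < r (cr_c1 (crossing_of k)))%N].

Lemma band_lt (a b : nat) (x y : R) : (a < b)%N -> -1 <= x <= 1 -> -1 <= y <= 1 ->
  3 * INR a + x < 3 * INR b + y.
Proof. intros H Hx Hy. apply nat_lt_INR in H. lra. Qed.

Lemma realize {m : nat} (cr : seq (crossing m)) (r : {perm 'I_m}) (U : 'I_m -> R -> R) :
  params_ok cr -> valid cr U -> gen cr U ->
  exists h, realizes (stateOf cr r U) h /\ vertically_trivial_link h /\
    forall i t, 3 * INR (r i) - 1 <= h i t <= 3 * INR (r i) + 1.
Proof.
  intros Hp Hv Hg.
  assert (HG : forall i, exists G : R -> R,
    (forall t, G (t + 1) = G t) /\ (forall t, continuous G t) /\
    (forall x, List.In x (Xs cr i) -> G x = cc (U i x)) /\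
    (forall t, -1 <= G t <= 1) /\
    (forall s t w, 0 <= s < 1 -> 0 <= t < 1 -> 0 <= w < 1 -> s <> t -> s <> w -> t <> w ->
       G s = G t -> G s = G w -> False)).
  { intros i. apply G_exists.
    - apply Xs_spec. apply pts_zero.
    - intros x Hx. apply Xs_spec in Hx. exact (pts_range cr Hp i x Hx).
    - intros x y Hx Hy Hxy. apply Xs_spec in Hx, Hy. apply Hv; auto. }
  set (Gf := fun i => proj1_sig (constructive_indefinite_description _ (HG i))).
  assert (HGf : forall i, let G := Gf i in
    (forall t, G (t + 1) = G t) /\ (forall t, continuous G t) /\
    (forall x, List.In x (Xs cr i) -> G x = cc (U i x)) /\
    (forall t, -1 <= G t <= 1) /\
    (forall s t w, 0 <= s < 1 -> 0 <= t < 1 -> 0 <= w < 1 -> s <> t -> s <> w -> t <> w ->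
       G s = G t -> G s = G w -> False)).
  { intros i. exact (proj2_sig (constructive_indefinite_description _ (HG i))). }
  exists (fun i t => 3 * INR (r i) + Gf i t).
  assert (Hsep : forall i j s t, i <> j -> 3 * INR (r i) + Gf i s <> 3 * INR (r j) + Gf j t).
  { intros i j s t Hij E.
    assert (Hr : (r i : nat) <> (r j : nat)).
    { intros E2. apply Hij. apply (@perm_inj _ r). apply val_inj. exact E2. }
    destruct (HGf i) as [_ [_ [_ [Bi _]]]]. destruct (HGf j) as [_ [_ [_ [Bj _]]]].
    destruct (ltngtP (r i) (r j)) as [H|H|H].
    - assert (HH := band_lt _ _ (Gf i s) (Gf j t) H (Bi s) (Bj t)). lra.
    - assert (HH := band_lt _ _ (Gf j t) (Gf i s) H (Bj t) (Bi s)). lra.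
    - contradiction. }
  assert (Hnode : forall k : 'I_(size cr),
     Gf (cr_c1 (crossing_of k)) (cr_s1 (crossing_of k)) =
       cc (U (cr_c1 (crossing_of k)) (cr_s1 (crossing_of k))) /\
     Gf (cr_c2 (crossing_of k)) (cr_s2 (crossing_of k)) =
       cc (U (cr_c2 (crossing_of k)) (cr_s2 (crossing_of k)))).
  { intros k. split.
    - destruct (HGf (cr_c1 (crossing_of k))) as [_ [_ [N _]]]. apply N. apply Xs_spec. apply pts_c1.
    - destruct (HGf (cr_c2 (crossing_of k))) as [_ [_ [N _]]]. apply N. apply Xs_spec. apply pts_c2. }
  split; [|split].
  - split; [|split].
    + intros i t. destruct (HGf i) as [P _]. rewrite P. reflexivity.
    + intros i t. destruct (HGf i) as [_ [C _]].
      apply (@cont_plus (fun _ => 3 * INR (r i)) (Gf i)); [apply cont_const|apply C].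
    + intros k. simpl. rewrite ffunE.
      destruct (Hnode k) as [N1 N2].
      case: eqP => [E|E].
      * rewrite -E in N2. rewrite -E. rewrite N1 N2.
        assert (Hgk := Hg k E).
        case_eq (Rltb (cc (U (cr_c1 (crossing_of k)) (cr_s2 (crossing_of k))))
                      (cc (U (cr_c1 (crossing_of k)) (cr_s1 (crossing_of k))))); intros Hb.
        -- apply RltbP in Hb. lra.
        -- apply RltbF in Hb. lra.
      * destruct (HGf (cr_c1 (crossing_of k))) as [_ [_ [_ [B1 _]]]].
        destruct (HGf (cr_c2 (crossing_of k))) as [_ [_ [_ [B2 _]]]].
        case_eq (r (cr_c2 (crossing_of k)) < r (cr_c1 (crossing_of k)))%N; intros Hb.
        -- apply band_lt; auto.
        -- assert (Hne : (r (cr_c1 (crossing_of k)) : nat) <> (r (cr_c2 (crossing_of k)) : nat)).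
           { intros E2. apply E. apply (@perm_inj _ r). apply val_inj. exact E2. }
           apply band_lt; auto. lia.
  - split.
    + intros i s j t Hs Ht Hd E. destruct (classic (i = j)) as [H|H]; auto.
      exfalso. exact (Hsep i j s t H E).
    + intros i s j t l u Hs Ht Hu D1 D2 D3 E1 E2.
      assert (Eij : i = j).
      { destruct (classic (i = j)) as [H|H]; auto. exfalso. exact (Hsep i j s t H E1). }
      assert (Ejl : j = l).
      { destruct (classic (j = l)) as [H|H]; auto. exfalso. exact (Hsep j l t u H E2). }
      subst j l.
      destruct (HGf i) as [_ [_ [_ [_ T]]]].
      unfold dparam in D1, D2, D3. unfold in01 in Hs, Ht, Hu.
      apply (T s t u Hs Ht Hu).
      * intros E. apply D1. auto.
      * intros E. apply D2. auto.
      * intros E. apply D3. auto.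
      * lra.
      * lra.
  - intros i t. destruct (HGf i) as [_ [_ [_ [B _]]]]. specialize (B t). lra.
Qed.


Lemma ivt (f : R -> R) a b y : (forall x, continuous f x) -> a <= b ->
  (f a <= y <= f b \/ f b <= y <= f a) -> exists x, a <= x <= b /\ f x = y.
Proof.
  intros Hc Hab Hy.
  destruct (IVT_gen_consistent f a b y Hc) as [x [Hx Ex]].
  - destruct Hy as [Hy|Hy].
    + split; [eapply Rle_trans; [apply Rmin_l|apply Hy]|eapply Rle_trans; [apply Hy|apply Rmax_r]].
    + split; [eapply Rle_trans; [apply Rmin_r|apply Hy]|eapply Rle_trans; [apply Hy|apply Rmax_l]].
  - exists x. rewrite Rmin_left in Hx; [|lra]. rewrite Rmax_right in Hx; [|lra]. auto.
Qed.

Lemma per_nat (f : R -> R) : (forall t, f (t + 1) = f t) -> forall n t, f (t + INR n) = f t.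
Proof.
  intros Hp n. induction n as [|n IH]; intros t.
  - simpl. rewrite Rplus_0_r. reflexivity.
  - rewrite S_INR. replace (t + (INR n + 1)) with ((t + INR n) + 1) by ring. rewrite Hp. apply IH.
Qed.

Lemma per_Z (f : R -> R) : (forall t, f (t + 1) = f t) -> forall k t, f (t + IZR k) = f t.
Proof.
  intros Hp k t. destruct (Z.le_gt_cases 0 k) as [H|H].
  - rewrite <- (Z2Nat.id k H). rewrite <- INR_IZR_INZ. apply per_nat. exact Hp.
  - assert (E : k = (- Z.of_nat (Z.to_nat (- k)))%Z) by lia.
    rewrite E opp_IZR -INR_IZR_INZ.
    rewrite <- (per_nat f Hp (Z.to_nat (- k)) (t + - INR (Z.to_nat (- k)))).
    f_equal. ring.
Qed.

Lemma f_frac (f : R -> R) : (forall t, f (t + 1) = f t) -> forall t, f (frac_part t) = f t.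
Proof.
  intros Hp t. rewrite {2}(Rplus_Int_part_frac_part t). rewrite Rplus_comm. symmetry. apply per_Z. exact Hp.
Qed.

Lemma frac_inj_window w a b : w <= a < w + 1 -> w <= b < w + 1 -> frac_part a = frac_part b -> a = b.
Proof.
  intros Ha Hb E. assert (Ea := Rplus_Int_part_frac_part a). assert (Eb := Rplus_Int_part_frac_part b).
  assert (D : a - b = IZR (Int_part a - Int_part b)) by (rewrite minus_IZR; lra).
  assert (Int_part a - Int_part b = 0)%Z by (apply int_small; rewrite <- D; lra).
  rewrite H in D. simpl in D. lra.
Qed.

Definition T2 (f : R -> R) : Prop :=
  forall s t u, 0 <= s < 1 -> 0 <= t < 1 -> 0 <= u < 1 -> s <> t -> s <> u -> t <> u ->
    f s = f t -> f t = f u -> False.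

Lemma T2_window (f : R -> R) : (forall t, f (t + 1) = f t) -> T2 f ->
  forall w a b c, w <= a < w + 1 -> w <= b < w + 1 -> w <= c < w + 1 ->
    a <> b -> a <> c -> b <> c -> f a = f b -> f b = f c -> False.
Proof.
  intros Hp HT w a b c Ha Hb Hc Hab Hac Hbc E1 E2.
  apply (HT (frac_part a) (frac_part b) (frac_part c)).
  - assert (H := base_fp a). lra.
  - assert (H := base_fp b). lra.
  - assert (H := base_fp c). lra.
  - intros E. apply Hab. exact (frac_inj_window w a b Ha Hb E).
  - intros E. apply Hac. exact (frac_inj_window w a c Ha Hc E).
  - intros E. apply Hbc. exact (frac_inj_window w b c Hb Hc E).
  - rewrite !f_frac; auto.
  - rewrite !f_frac; auto.
Qed.

Lemma decr_between (f : R -> R) (P Q : R) :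
  (forall x, continuous f x) ->
  (forall a b c, P <= a < P + 1 -> P <= b < P + 1 -> P <= c < P + 1 ->
    a <> b -> a <> c -> b <> c -> f a = f b -> f b = f c -> False) ->
  P < Q < P + 1 -> (forall t, f t <= f P) -> (forall t, f Q <= f t) ->
  forall a b, P <= a -> a < b -> b <= Q -> f b < f a.
Proof.
  intros Hc W3 HPQ Hmax Hmin a b Ha Hab Hb.
  destruct (Rlt_or_le (f b) (f a)) as [H|H]; [exact H|exfalso].
  destruct (Rle_lt_or_eq_dec _ _ H) as [Hlt|Heq].
  - set (L := (f a + f b) / 2).
    assert (HPb := Hmax b). assert (HQa := Hmin a).
    destruct (ivt f P a L Hc Ha) as [c1 [Hc1 E1]]; [right; unfold L; lra|].
    destruct (ivt f a b L Hc (Rlt_le _ _ Hab)) as [c2 [Hc2 E2]]; [left; unfold L; lra|].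
    destruct (ivt f b Q L Hc Hb) as [c3 [Hc3 E3]]; [right; unfold L; lra|].
    assert (c1 <> a) by (intros ->; unfold L in E1; lra).
    assert (c2 <> a) by (intros ->; unfold L in E2; lra).
    assert (c2 <> b) by (intros ->; unfold L in E2; lra).
    assert (c3 <> b) by (intros ->; unfold L in E3; lra).
    apply (W3 c1 c2 c3); try lra.
  - set (md := (a + b) / 2).
    assert (Hmd : f md <> f a).
    { intros E. apply (W3 a md b); unfold md in *; try lra. }
    destruct (Rlt_or_le (f a) (f md)) as [Hgt|Hle].
    + set (L := (f a + f md) / 2).
      assert (HPm := Hmax md).
      destruct (ivt f P a L Hc Ha) as [c1 [Hc1 E1]]; [right; unfold L; lra|].
      destruct (ivt f a md L Hc) as [c2 [Hc2 E2]]; [unfold md; lra|left; unfold L; lra|].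
      destruct (ivt f md b L Hc) as [c3 [Hc3 E3]]; [unfold md; lra|right; unfold L; lra|].
      assert (c1 <> a) by (intros ->; unfold L in E1; lra).
      assert (c2 <> a) by (intros ->; unfold L in E2; lra).
      assert (c2 <> md) by (intros ->; unfold L in E2; lra).
      assert (c3 <> md) by (intros ->; unfold L in E3; lra).
      assert (c3 <> b) by (intros ->; unfold L in E3; lra).
      apply (W3 c1 c2 c3); unfold md in *; try lra.
    + assert (Hlt : f md < f a) by lra.
      set (L := (f a + f md) / 2).
      assert (HQm := Hmin md).
      destruct (ivt f a md L Hc) as [c1 [Hc1 E1]]; [unfold md; lra|right; unfold L; lra|].
      destruct (ivt f md b L Hc) as [c2 [Hc2 E2]]; [unfold md; lra|left; unfold L; lra|].
      destruct (ivt f b Q L Hc Hb) as [c3 [Hc3 E3]]; [right; unfold L; lra|].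
      assert (c1 <> a) by (intros ->; unfold L in E1; lra).
      assert (c1 <> md) by (intros ->; unfold L in E1; lra).
      assert (c2 <> md) by (intros ->; unfold L in E2; lra).
      assert (c2 <> b) by (intros ->; unfold L in E2; lra).
      assert (c3 <> b) by (intros ->; unfold L in E3; lra).
      apply (W3 c1 c2 c3); unfold md in *; try lra.
Qed.

Lemma cont_pt_of (f : R -> R) : (forall t, continuous f t) -> forall t, continuity_pt f t.
Proof. intros Hc t. apply continuity_pt_filterlim. apply Hc. Qed.

Lemma unimodal_positions (f : R -> R) :
  (forall t, continuous f t) -> (forall t, f (t + 1) = f t) -> T2 f ->
  exists U : R -> R,
    (forall x y, 0 <= x -> x < y -> y < 1 -> U x < U y /\ U y < U x + 1) /\
    (forall s t, 0 <= s < 1 -> 0 <= t < 1 -> f s < f t -> cc (U s) < cc (U t)).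
Proof.
  intros Hc Hp HT.
  assert (Hcp := cont_pt_of f Hc).
  destruct (continuity_ab_maj f 0 1) as [p [Hpm Hp01]]; [lra|intros; apply Hcp|].
  destruct (continuity_ab_min f 0 1) as [q [Hqm Hq01]]; [lra|intros; apply Hcp|].
  assert (Gmax : forall t, f t <= f p).
  { intros t. rewrite -(f_frac f Hp t). apply Hpm. assert (H := base_fp t). lra. }
  assert (Gmin : forall t, f q <= f t).
  { intros t. rewrite -(f_frac f Hp t). apply Hqm. assert (H := base_fp t). lra. }
  set (p0 := frac_part p).
  assert (Hp0 : 0 <= p0 < 1) by (unfold p0; assert (H := base_fp p); lra).
  assert (Fp0 : f p0 = f p) by (unfold p0; apply f_frac; auto).
  set (q1 := frac_part q).
  assert (Hq1 : 0 <= q1 < 1) by (unfold q1; assert (H := base_fp q); lra).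
  assert (Fq1 : f q1 = f q) by (unfold q1; apply f_frac; auto).
  assert (Hne : f q < f p).
  { destruct (Rle_lt_or_eq_dec _ _ (Gmax q)) as [H|H]; [exact H|exfalso].
    apply (HT 0 (1/3) (2/3)); try lra.
    - assert (H1 := Gmax 0). assert (H2 := Gmin 0). assert (H3 := Gmax (1/3)). assert (H4 := Gmin (1/3)). lra.
    - assert (H1 := Gmax (2/3)). assert (H2 := Gmin (2/3)). assert (H3 := Gmax (1/3)). assert (H4 := Gmin (1/3)). lra. }
  assert (Hqp : q1 <> p0) by (intros E; rewrite E in Fq1; lra).
  set (Q := if Rlt_dec p0 q1 then q1 else q1 + 1).
  assert (HQ : p0 < Q < p0 + 1 /\ f Q = f q).
  { unfold Q. destruct (Rlt_dec p0 q1) as [H|H].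
    - simpl. split; [lra|exact Fq1].
    - assert (q1 < p0) by (destruct (Rtotal_order q1 p0) as [?|[?|?]]; [auto|contradiction|lra]).
      simpl. split; [lra|rewrite Hp; exact Fq1]. }
  destruct HQ as [HQ FQ].
  assert (W : forall w a b c, w <= a < w + 1 -> w <= b < w + 1 -> w <= c < w + 1 ->
    a <> b -> a <> c -> b <> c -> f a = f b -> f b = f c -> False)
    by (apply T2_window; auto).
  assert (DEC : forall a b, p0 <= a -> a < b -> b <= Q -> f b < f a).
  { apply (decr_between f p0 Q Hc (W p0) HQ).
    - intros t. rewrite Fp0. apply Gmax.
    - intros t. rewrite FQ. apply Gmin. }
  assert (INC : forall a b, Q <= a -> a < b -> b <= p0 + 1 -> f a < f b).
  { intros a b Ha Hab Hb.
    assert (H := decr_between (fun t => - f t) Q (p0 + 1)).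
    enough (- f b < - f a) by lra.
    apply H; auto.
    - intros x. apply (@continuous_opp _ _ _ f x). apply Hc.
    - intros a' b' c' Ha' Hb' Hc' D1 D2 D3 E1 E2. apply (W Q a' b' c'); auto; lra.
    - lra.
    - intros t. rewrite FQ. assert (H1 := Gmin t). lra.
    - intros t. rewrite Hp Fp0. assert (H1 := Gmax t). lra. }
  assert (HD : 0 < 2 * (f p - f q)) by lra.
  set (g := fun w => (f p - w) / (2 * (f p - f q))).
  assert (g_rng : forall t, 0 <= g (f t) <= 1/2).
  { intros t. unfold g.
    assert (H1 := Gmax t). assert (H2 := Gmin t). split.
    - apply Rmult_le_pos; [lra|]. apply Rlt_le, Rinv_0_lt_compat. lra.
    - apply (Rmult_le_reg_r (2 * (f p - f q))); [lra|]. unfold Rdiv. rewrite Rmult_assoc Rinv_l; lra. }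
  assert (g_decr : forall a b, a < b -> g b < g a).
  { intros a b H. unfold g. unfold Rdiv. apply Rmult_lt_compat_r; [apply Rinv_0_lt_compat; lra|lra]. }
  assert (g_pos : forall t, f t < f p -> 0 < g (f t)).
  { intros t H. unfold g. unfold Rdiv. apply Rmult_lt_0_compat; [lra|apply Rinv_0_lt_compat; lra]. }
  assert (g_half : forall t, f q < f t -> g (f t) < 1/2).
  { intros t H. unfold g.
    apply (Rmult_lt_reg_r (2 * (f p - f q))); [lra|]. unfold Rdiv. rewrite Rmult_assoc Rinv_l; lra. }
  set (Ut := fun s => if Rle_dec s Q then g (f s) else 1 - g (f s)).
  assert (Ut_incr : forall s t, p0 <= s -> s < t -> t < p0 + 1 -> Ut s < Ut t).
  { intros s t Hs Hst Ht. unfold Ut.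
    destruct (Rle_dec s Q) as [H1|H1]; destruct (Rle_dec t Q) as [H2|H2]; simpl.
    - apply g_decr. apply DEC; auto.
    - assert (H3 := g_rng s). assert (H4 := g_half t ltac:(rewrite -FQ; apply (INC Q t (Rle_refl _)); lra)). lra.
    - lra.
    - assert (H3 := INC s t ltac:(lra) Hst ltac:(lra)). apply g_decr in H3. lra. }
  assert (Ut_rng : forall s, p0 <= s < p0 + 1 -> 0 <= Ut s < 1).
  { intros s Hs. unfold Ut. destruct (Rle_dec s Q) as [H1|H1]; simpl.
    - assert (H := g_rng s). lra.
    - assert (H := INC s (p0 + 1) ltac:(lra) ltac:(lra) ltac:(lra)). rewrite Hp Fp0 in H.
      assert (H2 := g_pos s H). assert (H3 := g_rng s). lra. }
  set (lift := fun x => if Rlt_dec x p0 then x + 1 else x).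
  exists (fun x => Ut (lift x) - (lift x - x)). split.
  - intros x y Hx Hxy Hy. unfold lift.
    destruct (Rlt_dec x p0) as [H1|H1]; destruct (Rlt_dec y p0) as [H2|H2]; simpl.
    + assert (A1 := Ut_incr (x + 1) (y + 1) ltac:(lra) ltac:(lra) ltac:(lra)).
      assert (A2 := Ut_rng (x + 1) ltac:(lra)). assert (A3 := Ut_rng (y + 1) ltac:(lra)). lra.
    + assert (A1 := Ut_incr y (x + 1) ltac:(lra) ltac:(lra) ltac:(lra)).
      assert (A2 := Ut_rng (x + 1) ltac:(lra)). assert (A3 := Ut_rng y ltac:(lra)). lra.
    + lra.
    + assert (A1 := Ut_incr x y ltac:(lra) ltac:(lra) ltac:(lra)).
      assert (A2 := Ut_rng x ltac:(lra)). assert (A3 := Ut_rng y ltac:(lra)). lra.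
  - assert (Ecc : forall s, 0 <= s < 1 -> cc (Ut (lift s) - (lift s - s)) = cc (g (f s))).
    { intros s Hs. unfold lift, Ut.
      destruct (Rlt_dec s p0) as [H1|H1]; simpl.
      + replace (s + 1 - s) with 1 by ring. rewrite cc_minus1. rewrite Hp.
        destruct (Rle_dec (s + 1) Q); simpl; [reflexivity|apply cc_one_minus].
      + replace (s - s) with 0 by ring. rewrite Rminus_0_r.
        destruct (Rle_dec s Q); simpl; [reflexivity|apply cc_one_minus]. }
    intros s t Hs Ht Hst. rewrite (Ecc s Hs) (Ecc t Ht).
    assert (A1 := g_decr _ _ Hst). assert (A2 := g_rng s). assert (A3 := g_rng t).
    apply cc_decr; lra.
Qed.



Lemma comp_order {m : nat} (h : 'I_m -> R -> R) :
  (forall i t, continuous (h i) t) -> (forall i t, h i (t + 1) = h i t) ->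
  (forall i s j t, in01 s -> in01 t -> dparam i s j t -> h i s = h j t -> i = j) ->
  forall i j s t, i <> j -> h i s < h j t -> h i 0 < h j 0.
Proof.
  intros Hc Hp V1 i j s t Hij H.
  destruct (Rlt_or_le (h i 0) (h j 0)) as [H0|H0]; [exact H0|exfalso].
  destruct (Rle_lt_or_eq_dec _ _ H0) as [H1|H1].
  - set (phi := fun l => h i (l * s) - h j (l * t)).
    assert (Hphi : forall x, continuous phi x).
    { intros x. unfold phi.
      apply (@cont_minus (fun l => h i (l * s)) (fun l => h j (l * t))).
      - apply (@cont_comp (fun l => l * s) (h i)); [|apply Hc].
        apply (@cont_mult (fun l => l) (fun _ => s)); [apply cont_id|apply cont_const].
      - apply (@cont_comp (fun l => l * t) (h j)); [|apply Hc].
        apply (@cont_mult (fun l => l) (fun _ => t)); [apply cont_id|apply cont_const]. }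
    destruct (ivt phi 0 1 0 Hphi) as [l [Hl El]].
    + lra.
    + right. unfold phi. rewrite !Rmult_0_l !Rmult_1_l. lra.
    + unfold phi in El.
      assert (E : h i (frac_part (l * s)) = h j (frac_part (l * t))).
      { rewrite (f_frac (h i) (Hp i)) (f_frac (h j) (Hp j)). lra. }
      apply Hij. apply (V1 i (frac_part (l * s)) j (frac_part (l * t))); auto.
      * unfold in01. assert (HH := base_fp (l * s)). lra.
      * unfold in01. assert (HH := base_fp (l * t)). lra.
      * intros [E1 _]. contradiction.
  - apply Hij. apply (V1 i 0 j 0); auto.
    + unfold in01; lra.
    + unfold in01; lra.
    + intros [E1 _]. contradiction.
Qed.

Definition rk {m : nat} (h : 'I_m -> R -> R) (i : 'I_m) : nat :=
  #|[set j | Rltb (h j 0) (h i 0)]|.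

Lemma rk_lt {m : nat} (h : 'I_m -> R -> R) (i : 'I_m) : (rk h i < m)%N.
Proof.
  unfold rk.
  have Hsub : [set j | Rltb (h j 0) (h i 0)] \subset [set~ i].
  { apply/subsetP => j. rewrite !inE => Hj. apply/eqP => E. subst j.
    apply RltbP in Hj. lra. }
  have := subset_leq_card Hsub. rewrite cardsC1 card_ord.
  have := ltn_ord i. lia.
Qed.

Lemma rk_mono {m : nat} (h : 'I_m -> R -> R) (i j : 'I_m) : h j 0 < h i 0 -> (rk h j < rk h i)%N.
Proof.
  intros H. unfold rk. apply proper_card. apply/properP. split.
  - apply/subsetP => k. rewrite !inE => Hk. apply RltbP in Hk. apply RltbP. lra.
  - exists j.
    + rewrite inE. apply RltbP. exact H.
    + rewrite inE. apply/negP => Hj. apply RltbP in Hj. lra.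
Qed.

Lemma rank_perm {m : nat} (h : 'I_m -> R -> R) :
  (forall i j, i <> j -> h i 0 <> h j 0) ->
  exists r : {perm 'I_m}, forall i j, (r j < r i)%N <-> h j 0 < h i 0.
Proof.
  intros Hd.
  set (f := fun i => Ordinal (rk_lt h i)).
  have finj : injective f.
  { move=> i j E. destruct (classic (i = j)) as [H|H]; auto. exfalso.
    have E2 : rk h i = rk h j by move: E => /(congr1 val).
    destruct (Rtotal_order (h i 0) (h j 0)) as [H1|[H1|H1]].
    - have := rk_mono h j i H1. lia.
    - exact (Hd i j H H1).
    - have := rk_mono h i j H1. lia. }
  exists (perm finj). intros i j. rewrite !permE /=. split.
  - intros Hlt. destruct (Rtotal_order (h j 0) (h i 0)) as [H1|[H1|H1]]; auto.
    + exfalso. destruct (classic (i = j)) as [E|E].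
      * subst. lia.
      * exact (Hd j i (fun x => E (esym x)) H1).
    + exfalso. have := rk_mono h j i H1. lia.
  - apply rk_mono.
Qed.

Lemma initial_config {m : nat} (cr : seq (crossing m)) (D : state cr) :
  params_ok cr -> vertically_trivial_state D ->
  exists r U, valid cr U /\ gen cr U /\ stateOf cr r U = D.
Proof.
  intros Hpok [h [[Hper [Hcont Hcross]] [V1 V2]]].
  assert (HU : forall i, exists U : R -> R,
    (forall x y, 0 <= x -> x < y -> y < 1 -> U x < U y /\ U y < U x + 1) /\
    (forall s t, 0 <= s < 1 -> 0 <= t < 1 -> h i s < h i t -> cc (U s) < cc (U t))).
  { intros i. apply unimodal_positions.
    - apply Hcont.
    - apply Hper.
    - intros s t u Hs Ht Hu D1 D2 D3 E1 E2.
      apply (V2 i s i t i u Hs Ht Hu); auto.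
      + intros [_ E]. contradiction.
      + intros [_ E]. contradiction.
      + intros [_ E]. contradiction. }
  set (Uf := fun i => proj1_sig (constructive_indefinite_description _ (HU i))).
  assert (HUf : forall i,
    (forall x y, 0 <= x -> x < y -> y < 1 -> Uf i x < Uf i y /\ Uf i y < Uf i x + 1) /\
    (forall s t, 0 <= s < 1 -> 0 <= t < 1 -> h i s < h i t -> cc (Uf i s) < cc (Uf i t))).
  { intros i. exact (proj2_sig (constructive_indefinite_description _ (HU i))). }
  destruct (rank_perm h) as [r Hr].
  { intros i j Hij E. apply Hij. apply (V1 i 0 j 0); auto.
    - unfold in01; lra.
    - unfold in01; lra.
    - intros [E1 _]. contradiction. }
  assert (Hord := comp_order h Hcont Hper V1).
  assert (Hrng := pts_range cr Hpok).
  assert (Hk : forall k : 'I_(size cr),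
     if D k then h (cr_c2 (crossing_of k)) (cr_s2 (crossing_of k)) < h (cr_c1 (crossing_of k)) (cr_s1 (crossing_of k))
     else h (cr_c1 (crossing_of k)) (cr_s1 (crossing_of k)) < h (cr_c2 (crossing_of k)) (cr_s2 (crossing_of k))).
  { intros k. exact (Hcross k). }
  assert (Hs1 : forall k : 'I_(size cr), 0 <= cr_s1 (crossing_of k) < 1).
  { intros k. exact (Hrng _ _ (pts_c1 cr k)). }
  assert (Hs2 : forall k : 'I_(size cr), 0 <= cr_s2 (crossing_of k) < 1).
  { intros k. exact (Hrng _ _ (pts_c2 cr k)). }
  exists r, Uf. split; [|split].
  - intros i x y Hx Hy Hxy. apply HUf; auto.
    + exact (proj1 (Hrng _ _ Hx)).
    + exact (proj2 (Hrng _ _ Hy)).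
  - intros k E. specialize (Hk k). rewrite -E in Hk.
    destruct (HUf (cr_c1 (crossing_of k))) as [_ Hm].
    destruct (D k).
    + assert (HH := Hm _ _ (Hs2 k) (Hs1 k) Hk). lra.
    + assert (HH := Hm _ _ (Hs1 k) (Hs2 k) Hk). lra.
  - apply/ffunP => k. rewrite ffunE. specialize (Hk k).
    case: eqP => [E|E].
    + rewrite -E in Hk.
      destruct (HUf (cr_c1 (crossing_of k))) as [_ Hm].
      destruct (D k) eqn:HDk; rewrite ?HDk.
      * apply RltbP. exact (Hm _ _ (Hs2 k) (Hs1 k) Hk).
      * apply RltbF. assert (HH := Hm _ _ (Hs1 k) (Hs2 k) Hk). lra.
    + destruct (D k) eqn:HDk; rewrite ?HDk.
      * apply/idP. apply Hr. apply (Hord _ _ _ _ (fun x => E (esym x)) Hk).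
      * apply/negP => Hlt. apply Hr in Hlt. assert (HH := Hord _ _ _ _ E Hk). lra.
Qed.



Inductive reach {m : nat} {cr : seq (crossing m)} : state cr -> state cr -> Prop :=
| reach0 S : vertically_trivial_state S -> reach S S
| reachS S T U : vertically_trivial_state S -> move S T -> reach T U -> reach S U.

Lemma reach_vt_r {m : nat} {cr : seq (crossing m)} (S T : state cr) : reach S T -> vertically_trivial_state T.
Proof. induction 1; auto. Qed.

Lemma reach_trans {m : nat} {cr : seq (crossing m)} (S T U : state cr) : reach S T -> reach T U -> reach S U.
Proof.
  induction 1 as [S HS|S T0 T HS HM HR IH]; intros H; auto.
  apply (reachS S T0 U HS HM). auto.
Qed.

Definition self_step {m : nat} {cr : seq (crossing m)} (S T : state cr) : Prop :=
  S = T \/ exists k, is_self_crossing k /\ T = change_crossing S k.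

Inductive reachs {m : nat} {cr : seq (crossing m)} : state cr -> state cr -> Prop :=
| rs0 S : vertically_trivial_state S -> reachs S S
| rsS S T U : vertically_trivial_state S -> self_step S T -> reachs T U -> reachs S U.

Lemma reachs_vt_l {m : nat} {cr : seq (crossing m)} (S T : state cr) : reachs S T -> vertically_trivial_state S.
Proof. induction 1; auto. Qed.
Lemma reachs_vt_r {m : nat} {cr : seq (crossing m)} (S T : state cr) : reachs S T -> vertically_trivial_state T.
Proof. induction 1; auto. Qed.

Lemma reachs_trans {m : nat} {cr : seq (crossing m)} (S T U : state cr) : reachs S T -> reachs T U -> reachs S U.
Proof.
  induction 1 as [S HS|S T0 T HS HM HR IH]; intros H; auto.
  apply (rsS S T0 U HS HM). auto.
Qed.

Lemma reachs_step {m : nat} {cr : seq (crossing m)} (S T : state cr) :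
  vertically_trivial_state S -> vertically_trivial_state T -> self_step S T -> reachs S T.
Proof. intros HS HT H. apply (rsS S T T HS H). apply rs0. exact HT. Qed.

Lemma change_crossing_inv {m : nat} {cr : seq (crossing m)} (S : state cr) k :
  change_crossing (change_crossing S k) k = S.
Proof.
  apply/ffunP => j. rewrite !ffunE. case: eqP => [E|]; [by rewrite negbK|by []].
Qed.

Lemma self_step_sym {m : nat} {cr : seq (crossing m)} (S T : state cr) : self_step S T -> self_step T S.
Proof.
  intros [E|[k [Hk E]]].
  - left. auto.
  - right. exists k. split; auto. rewrite E. symmetry. apply change_crossing_inv.
Qed.

Lemma reachs_sym {m : nat} {cr : seq (crossing m)} (S T : state cr) : reachs S T -> reachs T S.
Proof.
  induction 1 as [S HS|S T0 T HS HM HR IH].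
  - apply rs0; auto.
  - apply (reachs_trans _ T0); auto.
    apply reachs_step; auto.
    + apply (reachs_vt_l _ _ HR).
    + apply self_step_sym. auto.
Qed.

Lemma reachs_reach {m : nat} {cr : seq (crossing m)} (S T : state cr) : reachs S T -> reach S T.
Proof.
  induction 1 as [S HS|S T0 T HS [E|[k [Hk E]]] HR IH].
  - apply reach0; auto.
  - subst. auto.
  - apply (reachS S T0 T HS); auto. left. exists k. auto.
Qed.

Lemma reach_seq {m : nat} {cr : seq (crossing m)} (S T : state cr) : reach S T ->
  exists (n : nat) (Ds : nat -> state cr),
    Ds 0%nat = S /\ Ds n = T /\
    (forall i, (i <= n)%N -> vertically_trivial_state (Ds i)) /\
    (forall i, (1 <= i <= n)%N -> move (Ds i.-1) (Ds i)).
Proof.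
  induction 1 as [S HS|S T0 T HS HM HR IH].
  - exists 0%nat, (fun _ => S). repeat split; auto. intros i Hi. lia.
  - destruct IH as [n [Ds [E0 [En [Hv Hm]]]]].
    exists n.+1, (fun i => if i is i'.+1 then Ds i' else S). split; [reflexivity|split; [exact En|split]].
    + intros [|i] Hi; [exact HS|apply Hv; exact Hi].
    + intros [|i] Hi; [lia|]. simpl. destruct i as [|i].
      * rewrite E0. exact HM.
      * apply (Hm i.+1). lia.
Qed.

Definition self_at {m : nat} {cr : seq (crossing m)} (k : 'I_(size cr)) (i : 'I_m) (x : R) : Prop :=
  cr_c1 (crossing_of k) = i /\ cr_c2 (crossing_of k) = i /\
  (cr_s1 (crossing_of k) = x \/ cr_s2 (crossing_of k) = x).

Lemma partner_of {m : nat} (gx gy : 'I_m -> R -> R) (cr : seq (crossing m)) :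
  is_diagram_projection gx gy cr ->
  forall (k : 'I_(size cr)) i x, self_at k i x ->
  exists y, y <> x /\ in01 x /\ in01 y /\ gx i x = gx i y /\ gy i x = gy i y /\
    crossing_at (crossing_of k) i x i y.
Proof.
  intros HD k i x [E1 [E2 Ex]].
  destruct HD as [_ [_ [_ [_ [H5 _]]]]].
  destruct (H5 k) as [I1 [I2 [Dp [Gx [Gy _]]]]].
  rewrite E1 E2 in Dp Gx Gy.
  destruct Ex as [Ex|Ex].
  - exists (cr_s2 (crossing_of k)). rewrite -Ex.
    split; [intros E; apply Dp; split; [reflexivity|symmetry; exact E]|].
    split; [exact I1|split; [exact I2|split; [exact Gx|split; [exact Gy|]]]].
    left. repeat split; auto.
  - exists (cr_s1 (crossing_of k)). rewrite -Ex.
    split; [intros E; apply Dp; split; [reflexivity|exact E]|].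
    split; [exact I2|split; [exact I1|split; [symmetry; exact Gx|split; [symmetry; exact Gy|]]]].
    right. repeat split; auto.
Qed.

Lemma self_unique {m : nat} (gx gy : 'I_m -> R -> R) (cr : seq (crossing m)) :
  is_diagram_projection gx gy cr ->
  forall (k k' : 'I_(size cr)) i x, self_at k i x -> self_at k' i x -> k = k'.
Proof.
  intros HD k k' i x H H'.
  destruct (partner_of gx gy cr HD k i x H) as [y [Hyx [Ix [Iy [Gx [Gy Ca]]]]]].
  destruct (partner_of gx gy cr HD k' i x H') as [y' [Hyx' [_ [Iy' [Gx' [Gy' Ca']]]]]].
  destruct HD as [_ [_ [_ [_ [_ [H6 H7]]]]]].
  destruct (classic (y = y')) as [Ey|Ey].
  - subst y'.
    destruct (H6 i x i y Ix Iy) as [k0 [Hk0 Hu]]; auto.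
    + intros [_ E]. apply Hyx. auto.
    + rewrite (Hu k Ca) (Hu k' Ca'). reflexivity.
  - exfalso. apply (H7 i x i y i y' Ix Iy Iy').
    + intros [_ E]. apply Hyx. auto.
    + intros [_ E]. apply Hyx'. auto.
    + intros [_ E]. apply Ey. auto.
    + auto.
    + auto.
    + auto.
    + auto.
Qed.

Lemma self_dparam {m : nat} (gx gy : 'I_m -> R -> R) (cr : seq (crossing m)) :
  is_diagram_projection gx gy cr ->
  forall k : 'I_(size cr), cr_c1 (crossing_of k) = cr_c2 (crossing_of k) ->
    cr_s1 (crossing_of k) <> cr_s2 (crossing_of k).
Proof.
  intros HD k E Es. destruct HD as [_ [_ [_ [_ [H5 _]]]]].
  destruct (H5 k) as [_ [_ [Dp _]]]. apply Dp. auto.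
Qed.



Definition upd {m : nat} (W : 'I_m -> R -> R) (i : 'I_m) (x t : R) : 'I_m -> R -> R :=
  fun j y => if j == i then (if Req_dec_T y x then t else W j y) else W j y.

Lemma upd_same {m : nat} (W : 'I_m -> R -> R) i x t : upd W i x t i x = t.
Proof. unfold upd. rewrite eqxx. destruct (Req_dec_T x x); [reflexivity|contradiction]. Qed.

Lemma upd_other {m : nat} (W : 'I_m -> R -> R) i x t j y : ~ (j = i /\ y = x) -> upd W i x t j y = W j y.
Proof.
  intros H. unfold upd. case: eqP => [E|E]; [|reflexivity].
  destruct (Req_dec_T y x) as [E2|E2]; [exfalso; apply H; auto|reflexivity].
Qed.

Definition Huniq_t {m : nat} (cr : seq (crossing m)) : Prop :=
  forall (k k' : 'I_(size cr)) i x, self_at k i x -> self_at k' i x -> k = k'.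
Definition Hdp_t {m : nat} (cr : seq (crossing m)) : Prop :=
  forall k : 'I_(size cr), cr_c1 (crossing_of k) = cr_c2 (crossing_of k) ->
    cr_s1 (crossing_of k) <> cr_s2 (crossing_of k).

Lemma vt_config {m : nat} (cr : seq (crossing m)) r W :
  params_ok cr -> valid cr W -> gen cr W -> vertically_trivial_state (stateOf cr r W).
Proof.
  intros Hp Hv Hg. destruct (realize cr r W Hp Hv Hg) as [h [H1 [H2 _]]]. exists h. auto.
Qed.

Lemma bool_diff {m : nat} {cr : seq (crossing m)} (S T : state cr) k0 :
  (forall k, k <> k0 -> T k = S k) -> T = S \/ T = change_crossing S k0.
Proof.
  intros H. destruct (Bool.bool_dec (T k0) (S k0)) as [E|E].
  - left. apply/ffunP => k. destruct (classic (k = k0)) as [->|Hk]; auto.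
  - right. apply/ffunP => k. rewrite ffunE. case: eqP => [->|Hk].
    + move: E. case: (T k0); case: (S k0) => //= E; by exfalso; apply E.
    + auto.
Qed.

Lemma step_state {m : nat} (cr : seq (crossing m)) r W i x t :
  Huniq_t cr -> self_step (stateOf cr r W) (stateOf cr r (upd W i x t)).
Proof.
  intros Hu.
  assert (A : forall k, ~ self_at k i x -> stateOf cr r (upd W i x t) k = stateOf cr r W k).
  { intros k Hk. rewrite !ffunE. case: eqP => [E|E]; [|reflexivity].
    rewrite !upd_other; try reflexivity;
      (intros [F1 F2]; apply Hk; unfold self_at; refine (conj F1 (conj _ _)); [rewrite -E; exact F1|first [left; exact F2|right; exact F2]]). }
  destruct (classic (exists k0 : 'I_(size cr), self_at k0 i x)) as [[k0 Hk0]|Hn].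
  - destruct (bool_diff (stateOf cr r W) (stateOf cr r (upd W i x t)) k0) as [E|E].
    + intros k Hk. apply A. intros Hk'. apply Hk. exact (Hu k k0 i x Hk' Hk0).
    + left. auto.
    + right. exists k0. split; auto.
      unfold is_self_crossing. destruct Hk0 as [E1 [E2 _]]. rewrite E1 E2. apply eqxx.
  - left. apply/ffunP => k. symmetry. apply A. intros H. apply Hn. exists k. exact H.
Qed.

Lemma gen_upd {m : nat} (cr : seq (crossing m)) W i x t :
  Hdp_t cr -> gen cr W ->
  (forall k : 'I_(size cr), cr_c1 (crossing_of k) = i -> cr_c2 (crossing_of k) = i ->
     (cr_s1 (crossing_of k) = x -> cc t <> cc (W i (cr_s2 (crossing_of k)))) /\
     (cr_s2 (crossing_of k) = x -> cc t <> cc (W i (cr_s1 (crossing_of k))))) ->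
  gen cr (upd W i x t).
Proof.
  intros Hdp Hg Hc k E.
  assert (Hd := Hdp k E).
  destruct (classic (cr_c1 (crossing_of k) = i)) as [Ei|Ei].
  - assert (E2 : cr_c2 (crossing_of k) = i) by (rewrite -E; auto).
    destruct (Hc k Ei E2) as [C1 C2].
    destruct (classic (cr_s1 (crossing_of k) = x)) as [Es1|Es1].
    + rewrite Es1 in Hd. rewrite Ei Es1 upd_same upd_other.
      * apply C1; exact Es1.
      * intros [_ H]. apply Hd. auto.
    + destruct (classic (cr_s2 (crossing_of k) = x)) as [Es2|Es2].
      * rewrite Ei Es2 upd_same upd_other.
        -- intros H. apply (C2 Es2). symmetry. exact H.
        -- intros [_ H]. apply Es1. auto.
      * rewrite !upd_other; try (intros [_ H]; auto). apply Hg. auto.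
  - rewrite !upd_other; try (intros [H _]; auto). apply Hg. auto.
Qed.

Lemma choose_t {m : nat} (cr : seq (crossing m)) W i x c tau :
  Huniq_t cr -> Hdp_t cr -> 0 < tau < 1 ->
  exists t, Rabs (t - c) < tau /\
  (forall k : 'I_(size cr), cr_c1 (crossing_of k) = i -> cr_c2 (crossing_of k) = i ->
     (cr_s1 (crossing_of k) = x -> cc t <> cc (W i (cr_s2 (crossing_of k)))) /\
     (cr_s2 (crossing_of k) = x -> cc t <> cc (W i (cr_s1 (crossing_of k))))).
Proof.
  intros Hu Hdp Htau.
  destruct (classic (exists k0 : 'I_(size cr), self_at k0 i x)) as [[k0 Hk0]|Hn].
  - set (y := if Req_dec_T (cr_s1 (crossing_of k0)) x then cr_s2 (crossing_of k0) else cr_s1 (crossing_of k0)).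
    destruct (cc_perturb c tau (W i y) Htau) as [t [Ht Hty]].
    exists t. split; auto. intros k E1 E2.
    assert (Hd : cr_s1 (crossing_of k0) <> cr_s2 (crossing_of k0)).
    { apply Hdp. destruct Hk0 as [F1 [F2 _]]. rewrite F1 F2. reflexivity. }
    split.
    + intros Es. assert (k = k0) by (apply (Hu k k0 i x); auto; split; auto). subst k.
      unfold y in Hty. destruct (Req_dec_T (cr_s1 (crossing_of k0)) x); [exact Hty|contradiction].
    + intros Es. assert (k = k0) by (apply (Hu k k0 i x); auto; split; auto). subst k.
      unfold y in Hty. destruct (Req_dec_T (cr_s1 (crossing_of k0)) x) as [E|E].
      * exfalso. apply Hd. rewrite E Es. reflexivity.
      * exact Hty.
  - exists c. split; [rewrite Rminus_diag Rabs_R0; lra|].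
    intros k E1 E2. split; intros Es; exfalso; apply Hn; exists k; split; auto; split; auto.
Qed.

Definition Lc {m : nat} (U V : 'I_m -> R -> R) (l : R) : 'I_m -> R -> R :=
  fun i x => (1 - l) * U i x + l * V i x.

Definition NearOr {m : nat} (cr : seq (crossing m)) (U V W : 'I_m -> R -> R) (l l' tau : R) : Prop :=
  forall i x, List.In (i, x) (pts cr) ->
    Rabs (W i x - Lc U V l i x) < tau \/ Rabs (W i x - Lc U V l' i x) < tau.

Lemma round {m : nat} (cr : seq (crossing m)) r U V l l' tau :
  params_ok cr -> Huniq_t cr -> Hdp_t cr -> 0 < tau < 1 ->
  (forall W, NearOr cr U V W l l' tau -> valid cr W) ->
  forall Q : list ('I_m * R), (forall q, List.In q Q -> List.In q (pts cr)) ->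
  forall W, gen cr W -> NearOr cr U V W l l' tau ->
  exists W', reachs (stateOf cr r W) (stateOf cr r W') /\ gen cr W' /\ NearOr cr U V W' l l' tau /\
    (forall i x, List.In (i, x) Q -> Rabs (W' i x - Lc U V l' i x) < tau) /\
    (forall i x, List.In (i, x) (pts cr) -> Rabs (W i x - Lc U V l' i x) < tau ->
       Rabs (W' i x - Lc U V l' i x) < tau).
Proof.
  intros Hp Hu Hdp Htau HvR Q. induction Q as [|[i x] Q IH]; intros HQ W Hg Hn.
  - exists W. split; [apply rs0; apply vt_config; auto|].
    split; [exact Hg|split; [exact Hn|split]].
    + intros i x [].
    + auto.
  - destruct (IH (fun q Hq => HQ q (or_intror Hq)) W Hg Hn) as [W1 [R1 [G1 [N1 [Q1 P1]]]]].
    destruct (choose_t cr W1 i x (Lc U V l' i x) tau Hu Hdp Htau) as [t [Ht Hc]].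
    set (W' := upd W1 i x t).
    assert (E' : forall j y, ~ (j = i /\ y = x) -> W' j y = W1 j y) by (intros; apply upd_other; auto).
    assert (Ex : W' i x = t) by apply upd_same.
    assert (N' : NearOr cr U V W' l l' tau).
    { intros j y Hjy. destruct (classic (j = i /\ y = x)) as [[-> ->]|H].
      - right. rewrite Ex. exact Ht.
      - rewrite (E' j y H). apply N1; auto. }
    assert (G' : gen cr W') by (apply gen_upd; auto).
    exists W'. split; [|split; [exact G'|split; [exact N'|split]]].
    + apply (reachs_trans _ (stateOf cr r W1)); auto.
      apply reachs_step.
      * apply vt_config; auto.
      * apply vt_config; auto.
      * apply step_state; auto.
    + intros j y [E|Hjy].
      * injection E as E1 E2. rewrite -E1 -E2 Ex. exact Ht.
      * destruct (classic (j = i /\ y = x)) as [[-> ->]|H]; [rewrite Ex; exact Ht|].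
        rewrite (E' j y H). apply Q1; auto.
    + intros j y Hjy Hw. destruct (classic (j = i /\ y = x)) as [[-> ->]|H]; [rewrite Ex; exact Ht|].
      rewrite (E' j y H). apply P1; auto.
Qed.

Lemma enum_In' (n : nat) (i : 'I_n) : List.In i (enum 'I_n).
Proof. apply enum_In. Qed.

Lemma conv_margin (m0 a b l : R) : 0 <= l <= 1 -> m0 <= a <= 1 - m0 -> m0 <= b <= 1 - m0 ->
  m0 <= (1 - l) * a + l * b <= 1 - m0.
Proof.
  intros Hl Ha Hb.
  assert (H1 : 0 <= (1 - l) * (a - m0)) by (apply Rmult_le_pos; lra).
  assert (H2 : 0 <= l * (b - m0)) by (apply Rmult_le_pos; lra).
  assert (H3 : 0 <= (1 - l) * (1 - m0 - a)) by (apply Rmult_le_pos; lra).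
  assert (H4 : 0 <= l * (1 - m0 - b)) by (apply Rmult_le_pos; lra).
  split; nra.
Qed.

Lemma P2 {m : nat} (cr : seq (crossing m)) r U V :
  params_ok cr -> Huniq_t cr -> Hdp_t cr -> valid cr U -> gen cr U -> valid cr V -> gen cr V ->
  reachs (stateOf cr r U) (stateOf cr r V).
Proof.
  intros Hp Hu Hdp HvU HgU HvV HgV.
  destruct (lb_pos (List.list_prod (pts cr) (pts cr))
     (fun p => fst (fst p) = fst (snd p) /\ snd (fst p) < snd (snd p))
     (fun p => Rmin (Rmin (U (fst (fst p)) (snd (snd p)) - U (fst (fst p)) (snd (fst p)))
                          (1 - (U (fst (fst p)) (snd (snd p)) - U (fst (fst p)) (snd (fst p)))))
                    (Rmin (V (fst (fst p)) (snd (snd p)) - V (fst (fst p)) (snd (fst p)))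
                          (1 - (V (fst (fst p)) (snd (snd p)) - V (fst (fst p)) (snd (fst p)))))))
    as [m0 [Hm0 Hm0b]].
  { intros [[i x] [j y]] Hin [E Hxy]. simpl in *. subst j.
    apply List.in_prod_iff in Hin. destruct Hin as [Hx Hy].
    destruct (HvU i x y Hx Hy Hxy). destruct (HvV i x y Hx Hy Hxy).
    apply Rmin_glb_lt; apply Rmin_glb_lt; lra. }
  assert (Lm : forall l, 0 <= l <= 1 -> forall i x y, List.In (i, x) (pts cr) -> List.In (i, y) (pts cr) ->
     x < y -> m0 <= Lc U V l i y - Lc U V l i x <= 1 - m0).
  { intros l Hl i x y Hx Hy Hxy.
    assert (H := Hm0b ((i, x), (i, y)) (proj2 (List.in_prod_iff _ _ _ _) (conj Hx Hy)) (conj erefl Hxy)).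
    simpl in H.
    assert (A1 := Rmin_l (Rmin (U i y - U i x) (1 - (U i y - U i x))) (Rmin (V i y - V i x) (1 - (V i y - V i x)))).
    assert (A2 := Rmin_r (Rmin (U i y - U i x) (1 - (U i y - U i x))) (Rmin (V i y - V i x) (1 - (V i y - V i x)))).
    assert (A3 := Rmin_l (U i y - U i x) (1 - (U i y - U i x))).
    assert (A4 := Rmin_r (U i y - U i x) (1 - (U i y - U i x))).
    assert (A5 := Rmin_l (V i y - V i x) (1 - (V i y - V i x))).
    assert (A6 := Rmin_r (V i y - V i x) (1 - (V i y - V i x))).
    unfold Lc.
    replace ((1 - l) * U i y + l * V i y - ((1 - l) * U i x + l * V i x))
      with ((1 - l) * (U i y - U i x) + l * (V i y - V i x)) by ring.
    apply conv_margin; auto; lra. }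
  destruct (ub_ex (pts cr) (fun _ => True) (fun p => Rabs (V (fst p) (snd p) - U (fst p) (snd p))))
    as [C [HC HCb]].
  destruct (lb_pos (enum 'I_(size cr)) (fun k => cr_c1 (crossing_of k) = cr_c2 (crossing_of k))
     (fun k => Rabs (cc (V (cr_c1 (crossing_of k)) (cr_s1 (crossing_of k))) -
                     cc (V (cr_c1 (crossing_of k)) (cr_s2 (crossing_of k)))))) as [g [Hg Hgb]].
  { intros k _ E. apply Rabs_pos_lt. intros H. apply (HgV k E). lra. }
  assert (HPI := PI_RGT_0).
  set (tau := Rmin (Rmin (m0 / 4) (g / (8 * PI))) (1 / 2)).
  assert (Htau : 0 < tau /\ tau <= m0 / 4 /\ tau <= g / (8 * PI) /\ tau <= 1/2).
  { unfold tau.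
    assert (A1 := Rmin_l (Rmin (m0 / 4) (g / (8 * PI))) (1 / 2)).
    assert (A2 := Rmin_r (Rmin (m0 / 4) (g / (8 * PI))) (1 / 2)).
    assert (A3 := Rmin_l (m0 / 4) (g / (8 * PI))).
    assert (A4 := Rmin_r (m0 / 4) (g / (8 * PI))).
    assert (0 < g / (8 * PI)) by (apply Rdiv_lt_0_compat; lra).
    repeat split; try lra.
    apply Rmin_glb_lt; [apply Rmin_glb_lt|]; lra. }
  destruct (INR_archimed (m0 / 4) C) as [n Hn]; [lra|].
  set (K := n.+1).
  assert (HK : 0 < INR K) by (unfold K; rewrite S_INR; assert (H := pos_INR n); lra).
  assert (HKC : C / INR K <= m0 / 4).
  { unfold K. rewrite S_INR. rewrite S_INR in HK.
    apply (Rmult_le_reg_r (INR n + 1)); [lra|]. unfold Rdiv. rewrite Rmult_assoc Rinv_l; [|lra].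
    assert (H := pos_INR n). nra. }
  set (lam := fun k : nat => INR k / INR K).
  assert (Hlam : forall k, (k <= K)%N -> 0 <= lam k <= 1).
  { intros k Hk. unfold lam. split.
    - apply Rmult_le_pos; [apply pos_INR|]. apply Rlt_le, Rinv_0_lt_compat; lra.
    - apply (Rmult_le_reg_r (INR K)); [lra|]. unfold Rdiv. rewrite Rmult_assoc Rinv_l; [|lra].
      rewrite Rmult_1_r Rmult_1_l. apply le_INR. apply/leP. exact Hk. }
  assert (Hstep : forall k i x, List.In (i, x) (pts cr) ->
     Rabs (Lc U V (lam k.+1) i x - Lc U V (lam k) i x) <= C / INR K).
  { intros k i x Hx. unfold Lc, lam.
    replace ((1 - INR k.+1 / INR K) * U i x + INR k.+1 / INR K * V i x -
             ((1 - INR k / INR K) * U i x + INR k / INR K * V i x))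
      with ((V i x - U i x) / INR K) by (rewrite S_INR; field; lra).
    unfold Rdiv. rewrite Rabs_mult (Rabs_right (/ INR K)); [|apply Rle_ge, Rlt_le, Rinv_0_lt_compat; lra].
    apply Rmult_le_compat_r; [apply Rlt_le, Rinv_0_lt_compat; lra|].
    exact (HCb (i, x) Hx I). }
  assert (Main : forall k, (k <= K)%N -> exists W, reachs (stateOf cr r U) (stateOf cr r W) /\ gen cr W /\
     forall i x, List.In (i, x) (pts cr) -> Rabs (W i x - Lc U V (lam k) i x) < tau).
  { induction k as [|k IH]; intros Hk.
    - exists U. split; [apply rs0; apply vt_config; auto|split; auto].
      intros i x _. unfold Lc, lam. simpl. unfold Rdiv. rewrite Rmult_0_l Rminus_0_r Rmult_1_l Rmult_0_l Rplus_0_r.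
      rewrite Rminus_diag Rabs_R0. lra.
    - destruct (IH ltac:(lia)) as [W [RW [GW NW]]].
      destruct (round cr r U V (lam k) (lam k.+1) tau Hp Hu Hdp ltac:(lra)) with (Q := pts cr) (W := W)
        as [W' [RW' [GW' [NW' [QW' _]]]]].
      + intros W0 HN i x y Hx Hy Hxy.
        assert (Cl : forall z, List.In (i, z) (pts cr) -> Rabs (W0 i z - Lc U V (lam k) i z) < m0 / 2).
        { intros z Hz. destruct (HN i z Hz) as [H|H].
          - lra.
          - assert (H2 := Hstep k i z Hz).
            assert (H3 := Rabs_triang (W0 i z - Lc U V (lam k.+1) i z) (Lc U V (lam k.+1) i z - Lc U V (lam k) i z)).
            replace (W0 i z - Lc U V (lam k.+1) i z + (Lc U V (lam k.+1) i z - Lc U V (lam k) i z))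
              with (W0 i z - Lc U V (lam k) i z) in H3 by ring.
            lra. }
        assert (Cx := Cl x Hx). assert (Cy := Cl y Hy).
        apply Rabs_def2 in Cx. apply Rabs_def2 in Cy.
        assert (M := Lm (lam k) (Hlam k ltac:(lia)) i x y Hx Hy Hxy). lra.
      + auto.
      + exact GW.
      + intros i x Hx. left. auto.
      + exists W'. split; [apply (reachs_trans _ _ _ RW RW')|split; [exact GW'|]].
        intros i x Hx. apply QW'. exact Hx. }
  destruct (Main K (leqnn K)) as [W [RW [GW NW]]].
  assert (LK : forall i x, Lc U V (lam K) i x = V i x).
  { intros i x. unfold Lc, lam. unfold Rdiv. rewrite Rinv_r; [|lra]. ring. }
  enough (E : stateOf cr r W = stateOf cr r V) by (rewrite -E; exact RW).
  apply/ffunP => k. rewrite !ffunE. case: eqP => [E|E]; [|reflexivity].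
  set (i := cr_c1 (crossing_of k)). set (s1 := cr_s1 (crossing_of k)). set (s2 := cr_s2 (crossing_of k)).
  assert (H1 : List.In (i, s1) (pts cr)) by apply pts_c1.
  assert (H2 : List.In (i, s2) (pts cr)) by (unfold i; rewrite E; apply pts_c2).
  assert (D1 := NW i s1 H1). assert (D2 := NW i s2 H2). rewrite LK in D1. rewrite LK in D2.
  assert (L1 := cc_lip (W i s1) (V i s1)). assert (L2 := cc_lip (W i s2) (V i s2)).
  assert (Gk := Hgb k (enum_In' _ k) E). fold i s1 s2 in Gk.
  assert (T1 : 2 * PI * Rabs (W i s1 - V i s1) <= g / 4).
  { assert (2 * PI * Rabs (W i s1 - V i s1) <= 2 * PI * (g / (8 * PI))).
    { apply Rmult_le_compat_l; lra. }
    replace (2 * PI * (g / (8 * PI))) with (g / 4) in H by (field; lra). lra. }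
  assert (T2' : 2 * PI * Rabs (W i s2 - V i s2) <= g / 4).
  { assert (2 * PI * Rabs (W i s2 - V i s2) <= 2 * PI * (g / (8 * PI))).
    { apply Rmult_le_compat_l; lra. }
    replace (2 * PI * (g / (8 * PI))) with (g / 4) in H by (field; lra). lra. }
  assert (A1 : Rabs (cc (W i s1) - cc (V i s1)) <= g / 4) by (eapply Rle_trans; [exact L1|exact T1]).
  assert (A2 : Rabs (cc (W i s2) - cc (V i s2)) <= g / 4) by (eapply Rle_trans; [exact L2|exact T2']).
  assert (A1' := Rle_abs (cc (W i s1) - cc (V i s1))).
  assert (A1'' := Rle_abs (- (cc (W i s1) - cc (V i s1)))). rewrite Rabs_Ropp in A1''.
  assert (A2' := Rle_abs (cc (W i s2) - cc (V i s2))).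
  assert (A2'' := Rle_abs (- (cc (W i s2) - cc (V i s2)))). rewrite Rabs_Ropp in A2''.
  destruct (Rlt_dec (cc (V i s2)) (cc (V i s1))) as [Hl|Hl].
  - assert (Rltb (cc (V i s2)) (cc (V i s1)) = true) by (apply RltbP; exact Hl).
    rewrite H. apply RltbP.
    rewrite Rabs_right in Gk; lra.
  - assert (Rltb (cc (V i s2)) (cc (V i s1)) = false) by (apply RltbF; exact Hl).
    rewrite H. apply RltbF.
    destruct (Rle_lt_or_eq_dec (cc (V i s1)) (cc (V i s2))) as [Hl2|Hl2]; [lra| |].
    + rewrite Rabs_left in Gk; lra.
    + rewrite Hl2 Rminus_diag Rabs_R0 in Gk. lra.
Qed.



Definition swp {m : nat} (r : {perm 'I_m}) (a b : 'I_m) : {perm 'I_m} := (r * tperm (r a) (r b))%g.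

Lemma swap_vals {m : nat} (r : {perm 'I_m}) (a b : 'I_m) :
  (r b = (r a).+1 :> nat) ->
  (swp r a b a = r b :> nat) /\ (swp r a b b = r a :> nat) /\
  (forall x, x <> a -> x <> b -> swp r a b x = r x).
Proof.
  intros H. unfold swp. rewrite !permM tpermL tpermR. split; [reflexivity|split; [reflexivity|]].
  intros x Ha Hb. rewrite permM. apply tpermD.
  - apply/eqP => E. apply Ha. apply (@perm_inj _ r). auto.
  - apply/eqP => E. apply Hb. apply (@perm_inj _ r). auto.
Qed.

Lemma rinj {m : nat} (r : {perm 'I_m}) (x y : 'I_m) : x <> y -> (r x : nat) <> (r y : nat).
Proof. intros H E. apply H. apply (@perm_inj _ r). apply val_inj. exact E. Qed.

Lemma swap_state {m : nat} (cr : seq (crossing m)) (r : {perm 'I_m}) V (a b : 'I_m) :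
  (r b = (r a).+1 :> nat) ->
  stateOf cr (swp r a b) V = change_between (stateOf cr r V) a b.
Proof.
  intros H. destruct (swap_vals r a b H) as [Sa [Sb Sx]].
  assert (Hab : a <> b) by (intros E; subst; lia).
  apply/ffunP => k. rewrite !ffunE.
  set (c1 := cr_c1 (crossing_of k)). set (c2 := cr_c2 (crossing_of k)).
  unfold Defs.between. fold c1 c2.
  case: (c1 =P c2) => [E|E].
  - rewrite E. case: (c2 =P a) => [Ea|Ea]; case: (c2 =P b) => [Eb|Eb]; simpl; auto.
    exfalso. apply Hab. rewrite -Ea -Eb. reflexivity.
  - set (r' := swp r a b).
    assert (I1 := rinj r c1 c2 E).
    case: (c1 =P a) => [E1a|E1a]; case: (c1 =P b) => [E1b|E1b];
    case: (c2 =P a) => [E2a|E2a]; case: (c2 =P b) => [E2b|E2b]; simpl;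
    try (exfalso; apply Hab; congruence); try (exfalso; apply E; congruence).
    + rewrite E1a E2b. unfold r'. rewrite Sa Sb. lia.
    + rewrite E1a. unfold r'. rewrite Sa (Sx c2 E2a E2b).
      assert (I2 := rinj r c2 a E2a). assert (I3 := rinj r c2 b E2b). lia.
    + rewrite E1b E2a. unfold r'. rewrite Sa Sb. lia.
    + rewrite E1b. unfold r'. rewrite Sb (Sx c2 E2a E2b).
      assert (I2 := rinj r c2 a E2a). assert (I3 := rinj r c2 b E2b). lia.
    + rewrite E2a. unfold r'. rewrite Sa (Sx c1 E1a E1b).
      assert (I2 := rinj r c1 a E1a). assert (I3 := rinj r c1 b E1b). lia.
    + rewrite E2b. unfold r'. rewrite Sb (Sx c1 E1a E1b).
      assert (I2 := rinj r c1 a E1a). assert (I3 := rinj r c1 b E1b). lia.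
    + unfold r'. rewrite (Sx c1 E1a E1b) (Sx c2 E2a E2b). reflexivity.
Qed.

Lemma swap_move {m : nat} (cr : seq (crossing m)) (r : {perm 'I_m}) V (a b : 'I_m) :
  params_ok cr -> valid cr V -> gen cr V -> (r b = (r a).+1 :> nat) ->
  move (stateOf cr r V) (stateOf cr (swp r a b) V).
Proof.
  intros Hp Hv Hg H. right. exists a, b. split; [|apply swap_state; auto].
  assert (Hab : a <> b) by (intros E; subst; lia).
  split; auto.
  destruct (realize cr r V Hp Hv Hg) as [h [Hr [HV Hb]]].
  exists h. split; auto. split; auto.
  intros [c [s [t [u [Hca [Hcb HH]]]]]].
  assert (Ba := Hb a t). assert (Ba' := Hb a u). assert (Bb := Hb b u). assert (Bb' := Hb b t).
  assert (Bc := Hb c s).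
  assert (Erb : INR (r b) = INR (r a) + 1) by (rewrite H S_INR; reflexivity).
  rewrite Erb in Bb Bb'.
  assert (I1 := rinj r c a Hca). assert (I2 := rinj r c b Hcb).
  destruct (ltngtP (r c) (r a)) as [L|L|L].
  - apply nat_lt_INR in L. destruct HH as [[H1 H2]|[H1 H2]]; lra.
  - assert (L2 : ((r a).+1 < r c)%N) by lia. apply nat_lt_INR in L2. rewrite S_INR in L2.
    destruct HH as [[H1 H2]|[H1 H2]]; lra.
  - exfalso. apply I1. apply/eqP. rewrite L. apply eqxx.
Qed.

Definition invset {m : nat} (r r2 : {perm 'I_m}) : {set 'I_m * 'I_m} :=
  [set p : 'I_m * 'I_m | (r p.1 < r p.2)%N && (r2 p.2 < r2 p.1)%N].

Lemma inv_decr {m : nat} (r r2 : {perm 'I_m}) (a b : 'I_m) :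
  (r b = (r a).+1 :> nat) -> (r2 b < r2 a)%N -> (#|invset (swp r a b) r2| < #|invset r r2|)%N.
Proof.
  intros H H2. destruct (swap_vals r a b H) as [Sa [Sb Sx]].
  assert (Hab : a <> b) by (intros E; subst; lia).
  apply proper_card. apply/properP. split.
  - apply/subsetP => [[x y]]. rewrite !inE /= => /andP [P1 P2]. apply/andP. split; auto.
    case: (x =P a) => [Exa|Exa]; case: (x =P b) => [Exb|Exb];
    case: (y =P a) => [Eya|Eya]; case: (y =P b) => [Eyb|Eyb];
    try (exfalso; apply Hab; congruence); subst.
    + lia.
    + rewrite Sa Sb in P1. lia.
    + rewrite Sa (Sx y Eya Eyb) in P1. assert (I2 := rinj r y a Eya). assert (I3 := rinj r y b Eyb). lia.
    + rewrite Sb Sa in P1. lia.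
    + lia.
    + rewrite Sb (Sx y Eya Eyb) in P1. assert (I2 := rinj r y a Eya). assert (I3 := rinj r y b Eyb). lia.
    + rewrite Sa (Sx x Exa Exb) in P1. assert (I2 := rinj r x a Exa). assert (I3 := rinj r x b Exb). lia.
    + rewrite Sb (Sx x Exa Exb) in P1. assert (I2 := rinj r x a Exa). assert (I3 := rinj r x b Exb). lia.
    + rewrite (Sx x Exa Exb) (Sx y Eya Eyb) in P1. exact P1.
  - exists (a, b).
    + rewrite inE /=. apply/andP. split; auto. lia.
    + rewrite inE /=. apply/negP => /andP [P1 _]. rewrite Sa Sb in P1. lia.
Qed.

Lemma mono_perm_ge {m : nat} (s : {perm 'I_m}) :
  (forall i j : 'I_m, (i < j)%N -> (s i < s j)%N) -> forall j : 'I_m, (j <= s j)%N.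
Proof.
  intros Hs.
  assert (G : forall n (j : 'I_m), (j : nat) = n -> (j <= s j)%N).
  { induction n as [|n IH]; intros j Hj.
    - rewrite Hj. done.
    - have Hn : (n < m)%N by (have := ltn_ord j; lia).
      have := IH (Ordinal Hn) erefl. have := Hs (Ordinal Hn) j ltac:(simpl; lia). simpl. lia. }
  intros j. apply (G j j). reflexivity.
Qed.

Lemma mono_perm_id {m : nat} (s : {perm 'I_m}) :
  (forall i j : 'I_m, (i < j)%N -> (s i < s j)%N) -> forall j : 'I_m, s j = j.
Proof.
  intros Hs j.
  have Hinv : forall i j : 'I_m, (i < j)%N -> ((s^-1)%g i < (s^-1)%g j)%N.
  { intros i k Hik. case: (ltngtP ((s^-1)%g i) ((s^-1)%g k)) => [L|L|L]; auto.
    - have := Hs _ _ L. rewrite !permKV. lia.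
    - exfalso. have E : (s^-1)%g i = (s^-1)%g k by apply val_inj.
      have := congr1 s E. rewrite !permKV => E2. subst. lia. }
  have G1 := mono_perm_ge s Hs j.
  have G2 := mono_perm_ge (s^-1)%g Hinv (s j). rewrite permK in G2.
  apply val_inj. simpl. lia.
Qed.

Lemma exists_adj {m : nat} (r r2 : {perm 'I_m}) : r <> r2 ->
  exists a b, (r b = (r a).+1 :> nat) /\ (r2 b < r2 a)%N.
Proof.
  intros Hne. apply NNPP. intros Hn. apply Hne.
  assert (H : forall a b, (r b = (r a).+1 :> nat) -> (r2 a < r2 b)%N).
  { intros a b E. case: (ltngtP (r2 a) (r2 b)) => [L|L|L]; auto.
    - exfalso. apply Hn. exists a, b. auto.
    - exfalso. have E2 : r2 a = r2 b by apply val_inj. apply (@perm_inj _ r2) in E2. subst. lia. }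
  assert (Hd : forall d a b, (r b = (r a + d.+1)%N :> nat) -> (r2 a < r2 b)%N).
  { induction d as [|d IH]; intros a b E.
    - apply H. lia.
    - have Hlt : ((r a).+1 < m)%N by (have := ltn_ord (r b); lia).
      set (c := (r^-1)%g (Ordinal Hlt)).
      have Ec : (r c = (r a).+1 :> nat) by (unfold c; rewrite permKV).
      have := H a c Ec. have := IH c b ltac:(lia). lia. }
  assert (Hm : forall x y, (r x < r y)%N -> (r2 x < r2 y)%N).
  { intros x y L. apply (Hd ((r y) - (r x))%N.-1). lia. }
  apply/permP => x.
  set (s := ((r^-1)%g * r2)%g).
  have Hs : forall i j : 'I_m, (i < j)%N -> (s i < s j)%N.
  { intros i j L. unfold s. rewrite !permM. apply Hm. rewrite !permKV. exact L. }
  have := mono_perm_id s Hs (r x). unfold s. rewrite permM permK. auto.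
Qed.

Lemma P3 {m : nat} (cr : seq (crossing m)) V (r r2 : {perm 'I_m}) :
  params_ok cr -> valid cr V -> gen cr V -> reach (stateOf cr r V) (stateOf cr r2 V).
Proof.
  intros Hp Hv Hg.
  assert (G : forall n (r : {perm 'I_m}), (#|invset r r2| <= n)%N -> reach (stateOf cr r V) (stateOf cr r2 V)).
  { induction n as [|n IH]; intros r0 Hn;
    (destruct (classic (r0 = r2)) as [E|E]; [subst; apply reach0; apply vt_config; auto|]);
    destruct (exists_adj r0 r2 E) as [a [b [Hab Hab2]]];
    have Hd := inv_decr r0 r2 a b Hab Hab2.
    - lia.
    - apply (reachS _ (stateOf cr (swp r0 a b) V)).
      + apply vt_config; auto.
      + apply swap_move; auto.
      + apply IH. lia. }
  apply (G #|invset r r2|). apply leqnn.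
Qed.



Lemma canon_valid {m : nat} (cr : seq (crossing m)) : params_ok cr -> valid cr (fun _ x => x / 2).
Proof.
  intros Hp i x y Hx Hy Hxy. assert (A := pts_range cr Hp i x Hx). assert (B := pts_range cr Hp i y Hy). lra.
Qed.

Lemma canon_gen {m : nat} (cr : seq (crossing m)) : params_ok cr -> Hdp_t cr -> gen cr (fun _ x => x / 2).
Proof.
  intros Hp Hdp k E Ec. apply (Hdp k E).
  apply cc_half_inj; auto.
  - exact (pts_range cr Hp _ _ (pts_c1 cr k)).
  - exact (pts_range cr Hp _ _ (pts_c2 cr k)).
Qed.

Local Close Scope R_scope.

Theorem proposition2p1 (m : nat) (gx gy : 'I_m -> R -> R)
    (cr : seq (crossing m)) (HD : is_diagram_projection gx gy cr)
    (D' D'' : state cr) :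
  vertically_trivial_state D' -> vertically_trivial_state D'' ->
  exists (n : nat) (Ds : nat -> state cr),
    Ds 0%nat = D' /\ Ds n = D'' /\
    (forall i, (i <= n)%nat -> vertically_trivial_state (Ds i)) /\
    (forall i, (1 <= i <= n)%nat -> move (Ds i.-1) (Ds i)).
Proof.
  intros H1 H2.
  have Hp := params_of_HD gx gy cr HD.
  have Hu : Huniq_t cr by (intros k k' i x; apply (self_unique gx gy cr HD)).
  have Hdp : Hdp_t cr by (intros k; apply (self_dparam gx gy cr HD)).
  destruct (initial_config cr D' Hp H1) as [r1 [U1 [Hv1 [Hg1 E1]]]].
  destruct (initial_config cr D'' Hp H2) as [r2 [U2 [Hv2 [Hg2 E2]]]].
  set (V := fun (_ : 'I_m) (x : R) => Rdiv x 2).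
  have HvV : valid cr V by apply canon_valid.
  have HgV : gen cr V by apply canon_gen.
  apply reach_seq.
  rewrite -E1 -E2.
  apply (reach_trans _ (stateOf cr r1 V)).
  - apply reachs_reach. apply P2; auto.
  - apply (reach_trans _ (stateOf cr r2 V)).
    + apply P3; auto.
    + apply reachs_reach. apply reachs_sym. apply P2; auto.
Qed.
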